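(* For every node $p \notin S_0$, if $p$ joins at time $t_p^j$ and is active at time $t \geq t_p^j$, then $SysInfo^{[0, \max\{0, t-2D\}]} \subseteq Changes_p^t$.
   Context: Model: asynchronous message passing; an adversary generates at most one Enter($p$), Leave($p$), Crash($p$) signal per node (forced leaves of crashed nodes may be generated at other active nodes and count toward churn). A node is present at $t$ if entered and not left; $N(t)$ is the number present, $N(t)\geq N_{min}$; $S_0$ is the set present at time 0; active = present and not crashed. A message broadcast by $p$ at time $t$ is received within $D$ time by every $q\neq p$ active throughout $[t,t+D]$ ($D$ unknown, no lower bound, FIFO). Churn: for some $\alpha<1$, at most $\alpha N(t)$ nodes enter or leave during any $[t,t+D]$. Failures: for some $\Delta<1$, at any $t$ at most $\Delta N(t)$ present nodes have crashed. Algorithm (CCReg, joining part): node $p$ keeps $Changes_p$ of $enter(q)$, $join(q)$, $leave(q)$ events (initially $\{enter(q),join(q): q\in S_0\}$ if $p\in S_0$, else empty); $Changes_p^t$ is its value at time $t$, and $Present_p=\{q: enter(q)\in Changes_p, leave(q)\notin Changes_p\}$. On Enter($p$) at time $t_p^e$, $p$ adds $enter(p)$ and broadcasts enter; a receiver adds $enter(p)$ and broadcasts an enter-echo with its Changes set (and value, is_joined flag); receivers merge Changes sets from enter-echoes. Upon its first enter-echo from a joined node, $p$ sets $join\_bound:=\gamma|Present_p|$; $p$ joins at time $t_p^j$ (adds $join(p)$, broadcasts joined) once it has received at least $join\_bound$ enter-echoes. Joined messages (sent at $t_q^j$) and leave messages (sent at $t_q^\ell$) cause receivers to add the event and broadcast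 an echo, whose receivers also add it. For an interval $I$, $SysInfo^I=\{enter(q): t_q^e\in I\}\cup\{join(q): t_q^j\in I\}\cup\{leave(q): t_q^\ell\in I\}$. Assumptions: $\alpha\leq 1-2^{-1/4}$; $1<((1-\alpha)^3-\Delta(1+\alpha)^3)N_{min}$; $\gamma \geq \frac{1}{N_{min}(1-\alpha)^3}+(1+\Delta)\frac{(1+\alpha)^3}{(1-\alpha)^3}-1$. *)

(* Defs.v *)
(* An execution is a schedule  sched : nat -> Step  of global steps, each
   occurring at real time  T n  (nondecreasing, unbounded, positive).  The
   configuration after the first n steps is computed by [cfg]; the message
   broadcast by step i (if any) is [bcast i], and a receive step names the
   step index of the broadcast it receives. *)
From Stdlib Require Import Reals Lra List Arith PeanoNat Bool.
Import ListNotations.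
Open Scope R_scope.

Definition Node := nat.

Inductive Event : Type :=
| EvEnter : Node -> Event
| EvJoin  : Node -> Event
| EvLeave : Node -> Event.

Definition event_eqb (a b : Event) : bool :=
  match a, b with
  | EvEnter x, EvEnter y => Nat.eqb x y
  | EvJoin x, EvJoin y => Nat.eqb x y
  | EvLeave x, EvLeave y => Nat.eqb x y
  | _, _ => false
  end.

Definition mem_ev (e : Event) (C : list Event) : bool := existsb (event_eqb e) C.

Definition entered_in (C : list Event) : list Node :=
  flat_map (fun e => match e with EvEnter q => [q] | _ => [] end) C.
Definition present_in (C : list Event) : list Node :=
  nodup Nat.eq_dec (filter (fun q => negb (mem_ev (EvLeave q) C)) (entered_in C)).

Inductive Msg : Type :=
| MEnter      : Node -> Msg
| MEnterEcho  : list Event -> bool -> Node -> Msg  (* <enter-echo, Changes, is_joined, q> *)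
| MJoined     : Node -> Msg
| MJoinedEcho : Node -> Msg
| MLeave      : Node -> Msg
| MLeaveEcho  : Node -> Msg.

Record LState := mkLState {
  changes    : list Event;      (* Changes_p (a finite set, as a list) *)
  is_joined  : bool;
  join_bound : option R;
  echo_count : nat              (* enter-echoes received in response to own enter *)
}.

Record Config := mkConfig {
  st       : Node -> LState;
  entered  : Node -> bool;      (* entered (or in S0) *)
  has_left : Node -> bool;
  crashed  : Node -> bool
}.

Definition upd {A : Type} (f : Node -> A) (x : Node) (v : A) : Node -> A :=
  fun y => if Nat.eqb y x then v else f y.

Definition add_changes (s : LState) (C : list Event) : LState :=
  mkLState (changes s ++ C) (is_joined s) (join_bound s) (echo_count s).

Definition set_st (c : Config) (q : Node) (s : LState) : Config :=
  mkConfig (upd (st c) q s) (entered c) (has_left c) (crashed c).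

Definition inS0 (S0 : list Node) (q : Node) : bool := existsb (Nat.eqb q) S0.

Definition init_state (S0 : list Node) (q : Node) : LState :=
  if inS0 S0 q
  then mkLState (flat_map (fun r => [EvEnter r; EvJoin r]) S0) true None 0
  else mkLState [] false None 0.

Definition init_config (S0 : list Node) : Config :=
  mkConfig (init_state S0) (inS0 S0) (fun _ => false) (fun _ => false).

Inductive Step : Type :=
| SEnter       : Node -> Step
| SLeave       : Node -> Step
| SForcedLeave : Node -> Node -> Step  (* SForcedLeave x r : forced leave of crashed x, generated at active r *)
| SCrash       : Node -> Step
| SRecv        : Node -> nat -> Step   (* SRecv q i : q receives the message broadcast at step i *)
| SIdle        : Step.

Definition recv (gamma : R) (c : Config) (q : Node) (m : Msg)
  : Config * option (Node * Msg) :=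
  let s := st c q in
  match m with
  | MEnter x =>
      let s' := add_changes s [EvEnter x] in
      (set_st c q s', Some (q, MEnterEcho (changes s') (is_joined s') x))
  | MEnterEcho C j x =>
      let s1 := add_changes s C in
      if negb (is_joined s1) && Nat.eqb x q then
        let jb := match join_bound s1 with
                  | Some b => Some b
                  | None => if j then Some (gamma * INR (length (present_in (changes s1))))
                            else None
                  end in
        let cnt := S (echo_count s1) in
        match jb with
        | Some b =>
            if Rle_dec b (INR cnt)
            then (set_st c q (mkLState (changes s1 ++ [EvJoin q]) true jb cnt),
                  Some (q, MJoined q))
            else (set_st c q (mkLState (changes s1) false jb cnt), None)
        | None => (set_st c q (mkLState (changes s1) false None cnt), None)
        end
      else (set_st c q s1, None)
  | MJoined x => (set_st c q (add_changes s [EvJoin x]), Some (q, MJoinedEcho x))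
  | MJoinedEcho x => (set_st c q (add_changes s [EvJoin x]), None)
  | MLeave x => (set_st c q (add_changes s [EvLeave x]), Some (q, MLeaveEcho x))
  | MLeaveEcho x => (set_st c q (add_changes s [EvLeave x]), None)
  end.

Definition trans (gamma : R) (c : Config) (bc : nat -> option (Node * Msg)) (s : Step)
  : Config * option (Node * Msg) :=
  match s with
  | SEnter p =>
      let c1 := mkConfig (st c) (upd (entered c) p true) (has_left c) (crashed c) in
      (set_st c1 p (add_changes (st c p) [EvEnter p]), Some (p, MEnter p))
  | SLeave p =>
      (mkConfig (st c) (entered c) (upd (has_left c) p true) (crashed c), Some (p, MLeave p))
  | SForcedLeave x r =>
      let c1 := mkConfig (st c) (entered c) (upd (has_left c) x true) (crashed c) in
      (set_st c1 r (add_changes (st c r) [EvLeave x]), Some (r, MLeave x))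
  | SCrash p =>
      (mkConfig (st c) (entered c) (has_left c) (upd (crashed c) p true), None)
  | SRecv q i =>
      match bc i with
      | Some (_, m) => recv gamma c q m
      | None => (c, None)
      end
  | SIdle => (c, None)
  end.

Fixpoint run (gamma : R) (S0 : list Node) (sched : nat -> Step) (n : nat)
  : Config * (nat -> option (Node * Msg)) :=
  match n with
  | O => (init_config S0, fun _ => None)
  | S k =>
      let '(c, bc) := run gamma S0 sched k in
      let '(c', out) := trans gamma c bc (sched k) in
      (c', fun i => if Nat.eqb i k then out else bc i)
  end.

Definition cfg gamma S0 sched n : Config := fst (run gamma S0 sched n).
Definition bcast gamma S0 sched (i : nat) : option (Node * Msg) :=
  snd (run gamma S0 sched (S i)) i.
Definition sender_of gamma S0 sched (i : nat) : option Node :=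
  option_map fst (bcast gamma S0 sched i).

Definition present (c : Config) (q : Node) : bool := entered c q && negb (has_left c q).
Definition active (c : Config) (q : Node) : bool := present c q && negb (crashed c q).

Definition time_ok (T : nat -> R) : Prop :=
  0 < T O /\ (forall i j, (i <= j)%nat -> T i <= T j) /\ (forall t, exists n, t < T n).

(* n = number of steps occurring at times <= t: the state "at time t" is cfg n *)
Definition cut (T : nat -> R) (t : R) (n : nat) : Prop :=
  (forall k, (k < n)%nat -> T k <= t) /\ t < T n.

Definition active_at gamma S0 sched T (q : Node) (t : R) : Prop :=
  exists n, cut T t n /\ active (cfg gamma S0 sched n) q = true.

Definition step_ok gamma S0 sched (T : nat -> R) (D : R) (n : nat) : Prop :=
  let c := cfg gamma S0 sched n in
  match sched n with
  | SEnter p => inS0 S0 p = false /\ entered c p = false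
  | SLeave p => active c p = true
  | SForcedLeave x r =>
      present c x = true /\ crashed c x = true /\ active c r = true /\ r <> x
  | SCrash p => active c p = true
  | SRecv q i =>
      (i < n)%nat /\
      (exists s m, bcast gamma S0 sched i = Some (s, m) /\ s <> q) /\
      active c q = true /\
      T n <= T i + D /\
      (forall k, (k < n)%nat -> sched k <> SRecv q i) /\
      (* FIFO *)
      (forall k i', (k < n)%nat -> sched k = SRecv q i' ->
         sender_of gamma S0 sched i' = sender_of gamma S0 sched i -> (i' < i)%nat)
  | SIdle => True
  end.

Definition delivery_ok gamma S0 sched (T : nat -> R) (D : R) : Prop :=
  forall i s m, bcast gamma S0 sched i = Some (s, m) ->
  forall q, q <> s ->
  (forall t, T i <= t <= T i + D -> active_at gamma S0 sched T q t) ->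
  exists n, sched n = SRecv q i /\ T n <= T i + D.

Definition card_pred (P : Node -> Prop) (k : nat) : Prop :=
  exists L, NoDup L /\ (forall q, In q L <-> P q) /\ length L = k.

Definition N_at gamma S0 sched T (t : R) (k : nat) : Prop :=
  exists n, cut T t n /\ card_pred (fun q => present (cfg gamma S0 sched n) q = true) k.

Definition Nmin_ok gamma S0 sched T (Nmin : nat) : Prop :=
  forall t k, 0 <= t -> N_at gamma S0 sched T t k -> (Nmin <= k)%nat.

Definition churns_in (sched : nat -> Step) (T : nat -> R) (x : Node) (a b : R) : Prop :=
  exists n, a <= T n <= b /\
    (sched n = SEnter x \/ sched n = SLeave x \/ exists r, sched n = SForcedLeave x r).

Definition churn_ok gamma S0 sched T (D alpha : R) : Prop :=
  forall t k, 0 <= t -> N_at gamma S0 sched T t k ->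
  forall L, NoDup L -> (forall x, In x L -> churns_in sched T x t (t + D)) ->
  INR (length L) <= alpha * INR k.

Definition failures_ok gamma S0 sched T (Delta : R) : Prop :=
  forall t n k, 0 <= t -> cut T t n ->
  card_pred (fun q => present (cfg gamma S0 sched n) q = true) k ->
  forall L, NoDup L ->
  (forall x, In x L -> present (cfg gamma S0 sched n) x = true /\
                       crashed (cfg gamma S0 sched n) x = true) ->
  INR (length L) <= Delta * INR k.

Definition joins_at gamma S0 sched (q : Node) (n : nat) : Prop :=
  is_joined (st (cfg gamma S0 sched n) q) = false /\
  is_joined (st (cfg gamma S0 sched (S n)) q) = true.

Definition event_at gamma S0 sched (n : nat) (ev : Event) : Prop :=
  match ev with
  | EvEnter q => sched n = SEnter q
  | EvJoin q => joins_at gamma S0 sched q n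
  | EvLeave q => sched n = SLeave q \/ exists r, sched n = SForcedLeave q r
  end.

Definition in_SysInfo gamma S0 sched (T : nat -> R) (a b : R) (ev : Event) : Prop :=
  exists n, a <= T n <= b /\ event_at gamma S0 sched n ev.

(* Main.v *)
Require Import Defs.
From Stdlib Require Import Reals Lra Psatz Lia List Arith PeanoNat Bool Classical.
Import ListNotations.
Open Scope R_scope.
Arguments INR : simpl never.

Lemma poly_ok a : 0 <= a -> a <= 0.16 -> 0 < 1 - 6*a - a^2 - 3*a^3 - a^4.
Proof. intros h0 h1.
  assert (a^2 <= 0.0256) by (simpl; nra).
  assert (a^3 <= 0.004096) by (simpl; nra).
  assert (a^4 <= 0.00065536) by (simpl; nra).
  lra. Qed.

Lemma lp_leaves (a X e1 e2 e3 l1 l2 l3 N0 M1 M2 : R) :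
  0 <= a -> a <= 0.16 -> 0 <= e2 -> 0 <= e3 -> 0 <= M1 ->
  e1 + l1 <= a * N0 -> N0 <= X + e1 -> M1 + l1 <= X + e1 ->
  e2 + l2 <= a * M1 -> M2 + l2 <= M1 + e2 -> e3 + l3 <= a * M2 ->
  l1 + l2 + l3 <= (1 - (1-a)^3) * X - (1 - 5*a + 4*a^2 - a^3) * e1.
Proof. intros ha0 ha1 he2 he3 hM1 c1 c2 c3 c4 c5 c6.
  assert (h1 : a * M2 <= a * (M1 + e2 - l2)) by (apply Rmult_le_compat_l; lra).
  assert (h2 : (1-a) * l2 <= (1-a) * (a * M1 - e2)) by (apply Rmult_le_compat_l; lra).
  assert (h3 : 0 <= (1 - 2*a) * e2) by (apply Rmult_le_pos; lra).
  assert (h23 : l2 + l3 <= (2*a - a^2) * M1) by (simpl; lra).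
  assert (h4 : (2*a - a^2) * M1 <= (2*a - a^2) * (X + e1 - l1)) by (apply Rmult_le_compat_l; simpl; nra).
  assert (h5 : a * N0 <= a * (X + e1)) by (apply Rmult_le_compat_l; lra).
  assert (h6 : (1-a)^2 * l1 <= (1-a)^2 * (a * (X + e1) - e1)) by (apply Rmult_le_compat_l; [simpl; nra| lra]).
  simpl in *. lra.
Qed.

Lemma c_bound a De : 0 <= a -> a <= 0.16 -> 0 <= De -> De * (1+a)^3 < (1-a)^3 ->
  (1 + De) * (1+a)^2 * a <= 1 - 5*a + 4*a^2 - a^3.
Proof. intros h0 h1 h2 h3.
  pose proof (poly_ok a h0 h1) as hp.
  assert (e : (1 - 5*a + 4*a^2 - a^3) * (1 + a) - a * (1+a)^3 - a * (1-a)^3 = 1 - 6*a - a^2 - 3*a^3 - a^4) by ring.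
  assert (h4 : a * (De * (1+a)^3) <= a * (1-a)^3) by (apply Rmult_le_compat_l; lra).
  apply (Rmult_le_reg_r (1 + a)); [lra|].
  assert (e2 : (1 + De) * (1+a)^2 * a * (1+a) = a * (1+a)^3 + a * (De * (1+a)^3)) by ring.
  lra. Qed.

Lemma arith_core (a De g Nm X L e1 e2 e3 l1 l2 l3 N0 M1 M2 Ns Cr P S : R) :
  0 <= a -> a <= 0.16 -> 0 <= De -> De * (1+a)^3 < (1-a)^3 -> 1 <= Nm ->
  (g + 1) * (1 - a)^3 >= (1 + De) * (1 + a)^3 + 1 / Nm ->
  Nm <= X ->
  0 <= e1 -> 0 <= e2 -> 0 <= e3 -> 0 <= l1 -> 0 <= l2 -> 0 <= l3 -> 0 <= L -> 0 <= Cr -> 0 <= P ->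
  0 <= N0 -> 0 <= M1 -> 0 <= M2 -> 0 <= Ns ->
  e1 + l1 <= a * N0 -> N0 <= X + e1 ->
  M1 + l1 <= X + e1 ->
  e2 + l2 <= a * M1 -> M2 + l2 <= M1 + e2 ->
  e3 + l3 <= a * M2 ->
  Cr <= De * Ns -> Ns <= M1 + e2 + e3 ->
  L <= l1 + l2 + l3 -> X <= P + L ->
  g * P <= S -> S <= e1 + e2 + e3 + L + Cr -> False.
Proof.
  intros ha0 ha1 hd0 hd1 hN hg hX he1 he2 he3 hl1 hl2 hl3 hL hCr hP hN0 hM1 hM2 hNs0
    c1 c2 c3 c4 c5 c6 c7 c8 c9 c10 c11 c12.
  pose proof (lp_leaves a X e1 e2 e3 l1 l2 l3 N0 M1 M2 ha0 ha1 he2 he3 hM1 c1 c2 c3 c4 c5 c6) as hl.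
  pose proof (c_bound a De ha0 ha1 hd0 hd1) as hc.
  set (c := 1 - 5*a + 4*a^2 - a^3) in *.
  set (l := l1 + l2 + l3) in *.
  set (p3 := (1-a)^3) in *. set (q3 := (1+a)^3) in *. set (q2 := (1+a)^2) in *.
  assert (hp3 : 0 < p3) by (unfold p3; apply pow_lt; lra).
  assert (hp31 : p3 <= 1) by (unfold p3; simpl; assert (0 <= 1 - a) by lra; assert ((1-a)*(1-a) <= 1) by nra; nra).
  assert (hq3 : 1 <= q3) by (unfold q3; apply pow_R1_Rle; lra).
  assert (hq2 : 1 <= q2) by (unfold q2; apply pow_R1_Rle; lra).
  assert (hq32 : q3 = q2 * (1 + a)) by (unfold q3, q2; ring).
  assert (hinv : 0 < 1 / Nm) by (apply Rdiv_lt_0_compat; lra).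
  assert (hXN : X * (1 / Nm) >= 1).
  { apply Rle_ge. apply (Rmult_le_reg_r Nm); [lra|]. unfold Rdiv. replace (X * (1 * / Nm) * Nm) with (X * (/ Nm * Nm)) by ring. rewrite Rinv_l by lra. lra. }
  assert (hc0 : 0 <= c).
  { assert (0 <= (1 + De) * q2 * a) by (apply Rmult_le_pos; [apply Rmult_le_pos; lra| lra]). lra. }
  assert (hg1 : 1 <= g + 1).
  { destruct (Rle_dec 1 (g + 1)) as [h|h]; auto. exfalso.
    assert (hh : (g + 1) * p3 < 1).
    { destruct (Rle_dec 0 (g + 1)).
      - assert ((g+1) * p3 < 1 * p3) by (apply Rmult_lt_compat_r; lra). lra.
      - assert ((g+1) * p3 < 0 * p3) by (apply Rmult_lt_compat_r; lra). lra. }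
    assert (0 <= De * q3) by (apply Rmult_le_pos; lra). lra. }
  assert (hXl : p3 * X + c * e1 <= X - l) by lra.
  assert (hA : (g + 1) * (X - l) >= (g + 1) * (p3 * X) + c * e1).
  { assert ((g+1) * (p3 * X + c * e1) <= (g+1) * (X - l)) by (apply Rmult_le_compat_l; lra).
    assert (c * e1 <= (g + 1) * (c * e1)).
    { assert (0 <= c * e1) by (apply Rmult_le_pos; lra).
      assert (1 * (c * e1) <= (g + 1) * (c * e1)) by (apply Rmult_le_compat_r; lra). lra. }
    lra. }
  assert (hB : (g + 1) * (p3 * X) >= ((1 + De) * q3 + 1 / Nm) * X).
  { assert (((1 + De) * q3 + 1 / Nm) * X <= ((g + 1) * p3) * X) by (apply Rmult_le_compat_r; lra).
    lra. }
  assert (hS : g * (X - l) - l <= e1 + e2 + e3 + Cr).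
  { assert (h1 : g * (X - L) <= g * P) by (apply Rmult_le_compat_l; lra).
    assert (h2 : g * (X - l) <= g * (X - L)) by (apply Rmult_le_compat_l; lra).
    lra. }
  assert (hM2' : M2 <= (1 + a) * M1) by (assert (a * M1 >= e2) by lra; lra).
  assert (he3' : e3 <= a * (1 + a) * M1).
  { assert (a * M2 <= a * ((1 + a) * M1)) by (apply Rmult_le_compat_l; lra). lra. }
  assert (hM1' : M1 <= X + e1) by lra.
  assert (hE : e2 + e3 <= (q2 - 1) * (X + e1)).
  { assert ((q2 - 1) * M1 <= (q2 - 1) * (X + e1)) by (apply Rmult_le_compat_l; lra).
    assert (e : (q2 - 1) * M1 = a * M1 + a * (1 + a) * M1) by (unfold q2; ring). lra. }
  assert (hNs : Ns <= q2 * (X + e1)).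
  { assert (q2 * M1 <= q2 * (X + e1)) by (apply Rmult_le_compat_l; lra).
    assert (e : q2 * M1 = M1 + a * M1 + a * (1 + a) * M1) by (unfold q2; ring). lra. }
  assert (hCr' : Cr <= De * q2 * (X + e1)).
  { assert (De * Ns <= De * (q2 * (X + e1))) by (apply Rmult_le_compat_l; lra). lra. }
  assert (he1' : (1 - a) * e1 <= a * X).
  { assert (a * N0 <= a * (X + e1)) by (apply Rmult_le_compat_l; lra). lra. }
  assert (hF : (1 + De) * q2 * ((1 - a) * e1) <= (1 + De) * q2 * (a * X)).
  { apply Rmult_le_compat_l; [apply Rmult_le_pos; lra|lra]. }
  assert (hG : (1 + De) * q2 * a * e1 <= c * e1) by (apply Rmult_le_compat_r; lra).
  assert (hfin : (1 + De) * q2 * e1 <= (1 + De) * q2 * a * X + c * e1).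
  { assert (e : (1 + De) * q2 * ((1 - a) * e1) = (1 + De) * q2 * e1 - (1 + De) * q2 * a * e1) by ring. lra. }
  rewrite hq32 in hB.
  assert (e4 : g * (X - l) - l = (g + 1) * (X - l) - X) by ring.
  assert (e5 : (1 + De) * (q2 * (1 + a)) * X = (1 + De) * q2 * X + (1 + De) * q2 * a * X) by ring.
  assert (e6 : De * q2 * (X + e1) = De * q2 * X + De * q2 * e1) by ring.
  assert (e7 : ((1 + De) * (q2 * (1 + a)) + 1 / Nm) * X = (1 + De) * (q2 * (1 + a)) * X + X * (1 / Nm)) by ring.
  assert (e8 : (q2 - 1) * (X + e1) = q2 * X + q2 * e1 - X - e1) by ring.
  assert (e9 : (1 + De) * q2 * e1 = q2 * e1 + De * q2 * e1) by ring.
  assert (e10 : (1 + De) * q2 * X = q2 * X + De * q2 * X) by ring.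
  lra.
Qed.

Lemma alpha_small a : a <= 1 - Rpower 2 (- (1 / 4)) -> a <= 0.16.
Proof. intros h. set (y := Rpower 2 (- (1/4))).
  assert (hy0 : 0 < y) by (unfold y, Rpower; apply exp_pos).
  assert (hy4 : y ^ 4 = / 2).
  { unfold y. rewrite <- Rpower_pow by (apply exp_pos).
    rewrite Rpower_mult. replace (- (1/4) * INR 4) with (- (1)) by (rewrite INR_IZR_INZ; simpl; field).
    rewrite Rpower_Ropp, Rpower_1 by lra. reflexivity. }
  assert (0.84 <= y).
  { destruct (Rle_dec 0.84 y) as [h'|h']; auto. exfalso.
    assert (y < 0.84) by lra.
    assert (y^2 < 0.84^2) by (simpl; nra).
    assert (y^4 = y^2 * y^2) by ring.
    assert (y^4 < 0.84^2 * 0.84^2) by (simpl in *; nra).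
    lra. }
  fold y in h. lra. Qed.

Lemma params a De g (Nm : nat) :
  0 <= a -> a <= 1 - Rpower 2 (- (1 / 4)) -> 0 <= De ->
  1 < ((1 - a) ^ 3 - De * (1 + a) ^ 3) * INR Nm ->
  g >= 1 / (INR Nm * (1 - a) ^ 3) + (1 + De) * (1 + a) ^ 3 / (1 - a) ^ 3 - 1 ->
  a <= 0.16 /\ De * (1+a)^3 < (1-a)^3 /\ 1 <= INR Nm /\
  (g + 1) * (1 - a)^3 >= (1 + De) * (1 + a)^3 + 1 / INR Nm.
Proof. intros h0 h1 h2 h3 h4.
  pose proof (alpha_small a h1) as ha.
  assert (hp : 0 < (1-a)^3) by (apply pow_lt; lra).
  assert (hN0 : 0 <= INR Nm) by apply pos_INR.
  assert (hpos : 0 < (1 - a) ^ 3 - De * (1 + a) ^ 3).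
  { destruct (Rle_dec ((1 - a) ^ 3 - De * (1 + a) ^ 3) 0); auto; [|lra].
    assert (((1 - a) ^ 3 - De * (1 + a) ^ 3) * INR Nm <= 0 * INR Nm) by (apply Rmult_le_compat_r; lra). lra. }
  assert (hN : 1 <= INR Nm).
  { destruct Nm. change (INR 0) with 0 in h3. lra. rewrite S_INR. pose proof (pos_INR Nm). lra. }
  split; auto. split; [lra|]. split; auto.
  apply Rge_le in h4. apply Rle_ge.
  assert (e : (1 / (INR Nm * (1 - a) ^ 3) + (1 + De) * (1 + a) ^ 3 / (1 - a) ^ 3 - 1 + 1) * (1 - a)^3
              = (1 + De) * (1 + a)^3 + 1 / INR Nm) by (field; lra).
  rewrite <- e. apply Rmult_le_compat_r; lra.
Qed.

Definition st_rel (c c' : Config) : Prop :=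
  exists q s', (forall z, st c' z = if Nat.eqb z q then s' else st c z) /\
   (exists l, changes s' = changes (st c q) ++ l) /\
   (is_joined (st c q) = true -> is_joined s' = true) /\
   (forall b, join_bound (st c q) = Some b -> join_bound s' = Some b).
Lemma st_rel_same c c' : (forall z, st c' z = st c z) -> st_rel c c'.
Proof. intros H. exists 0%nat, (st c 0%nat). split.
  intros z. rewrite H. destruct (Nat.eqb_spec z 0); subst; auto.
  split. exists []. rewrite app_nil_r; auto. split; auto. Qed.

Lemma trans_st gamma c b s : st_rel c (fst (trans gamma c b s)).
Proof.
  destruct s; simpl.
  - exists n, (add_changes (st c n) [EvEnter n]). simpl. split. intros z. unfold upd. reflexivity.
    split. eexists; reflexivity. split; auto.
  - apply st_rel_same; auto.
  - exists n0, (add_changes (st c n0) [EvLeave n]). simpl. split. intros z. unfold upd. reflexivity.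
    split. eexists; reflexivity. split; auto.
  - apply st_rel_same; auto.
  - destruct (b n0) as [[x m]|]; [|apply st_rel_same; auto].
    destruct m; simpl.
    + exists n, (add_changes (st c n) [EvEnter n1]). simpl. split. intros z. unfold upd. reflexivity.
      split. eexists; reflexivity. split; auto.
    + destruct (negb (is_joined (st c n)) && Nat.eqb n1 n) eqn:E.
      * apply andb_true_iff in E. destruct E as [E1 E2]. apply negb_true_iff in E1.
        destruct (join_bound (st c n)) as [bb|] eqn:Ejb.
        -- simpl. destruct (Rle_dec bb (INR (S (echo_count (st c n))))); simpl.
           ++ eexists n, _.
              split. intros z. unfold upd. reflexivity. split. exists (l ++ [EvJoin n]). simpl. rewrite app_assoc; auto.
              split; auto. intros bq Hb; simpl; congruence.
           ++ exists n, (mkLState (changes (st c n) ++ l) false (Some bb) (S (echo_count (st c n)))).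
              simpl. split. intros z. unfold upd. reflexivity. split. eexists; reflexivity.
              split. rewrite E1; auto. intros bq Hb; simpl; congruence.
        -- simpl. destruct b0.
           ++ destruct (Rle_dec (gamma * INR (length (present_in (changes (st c n) ++ l)))) (INR (S (echo_count (st c n))))); simpl.
              ** eexists n, _. split. intros z. unfold upd. reflexivity. split. exists (l ++ [EvJoin n]). simpl. rewrite app_assoc; auto.
                 split; auto. intros bq Hb; simpl; congruence.
              ** eexists n, _. split. intros z. unfold upd. reflexivity. split. exists l; simpl; auto.
                 split. rewrite E1; intros; congruence. intros bq Hb; simpl; congruence.
           ++ eexists n, _. split. intros z. unfold upd. reflexivity. split. exists l; simpl; auto.
              split. rewrite E1; intros; congruence. intros bq Hb; simpl; congruence.
      * exists n, (add_changes (st c n) l). simpl. split. intros z. unfold upd. reflexivity.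
        split. eexists; reflexivity. split; auto.
    + exists n, (add_changes (st c n) [EvJoin n1]). simpl. split. intros z. unfold upd. reflexivity.
      split. eexists; reflexivity. split; auto.
    + exists n, (add_changes (st c n) [EvJoin n1]). simpl. split. intros z. unfold upd. reflexivity.
      split. eexists; reflexivity. split; auto.
    + exists n, (add_changes (st c n) [EvLeave n1]). simpl. split. intros z. unfold upd. reflexivity.
      split. eexists; reflexivity. split; auto.
    + exists n, (add_changes (st c n) [EvLeave n1]). simpl. split. intros z. unfold upd. reflexivity.
      split. eexists; reflexivity. split; auto.
  - apply st_rel_same; auto.
Qed.

Lemma trans_flags gamma c b s x :
  let c' := fst (trans gamma c b s) in
  (entered c x = true -> entered c' x = true) /\
  (has_left c x = true -> has_left c' x = true) /\
  (crashed c x = true -> crashed c' x = true).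
Proof.
  destruct s; simpl; unfold recv; repeat (match goal with |- context [match ?x with _ => _ end] => destruct x end; simpl);
  unfold upd; repeat split; intros; repeat (match goal with |- context [Nat.eqb ?a ?b] => destruct (Nat.eqb a b) end); auto.
Qed.


Definition msg_ev (M : Msg) : list Event :=
  match M with
  | MEnter y => [EvEnter y] | MEnterEcho C _ _ => C
  | MJoined y => [EvJoin y] | MJoinedEcho y => [EvJoin y]
  | MLeave y => [EvLeave y] | MLeaveEcho y => [EvLeave y]
  end.

Lemma trans_out gamma c b s sg M : snd (trans gamma c b s) = Some (sg, M) ->
  match M with
  | MEnter y => s = SEnter y /\ sg = y
  | MEnterEcho C j y => exists i0 x, s = SRecv sg i0 /\ b i0 = Some (x, MEnter y) /\
        C = changes (st c sg) ++ [EvEnter y] /\ j = is_joined (st c sg)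
  | MJoined y => sg = y /\ exists i0 x C j, s = SRecv y i0 /\ b i0 = Some (x, MEnterEcho C j y)
  | MJoinedEcho y => exists i0 x, s = SRecv sg i0 /\ b i0 = Some (x, MJoined y)
  | MLeave y => (s = SLeave y /\ sg = y) \/ s = SForcedLeave y sg
  | MLeaveEcho y => exists i0 x, s = SRecv sg i0 /\ b i0 = Some (x, MLeave y)
  end.
Proof.
  destruct s; simpl; intros H; try discriminate.
  - inversion H; subst; auto.
  - inversion H; subst; auto.
  - inversion H; subst; auto.
  - destruct (b n0) as [[x m]|] eqn:Eb; [|discriminate].
    unfold recv in H. destruct m; simpl in H.
    + inversion H; subst. simpl. eauto 10.
    + destruct (negb (is_joined (st c n)) && Nat.eqb n1 n) eqn:E; [|discriminate].
      apply andb_true_iff in E. destruct E as [_ E2]. apply Nat.eqb_eq in E2. subst.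
      destruct (join_bound (st c n)); [|destruct b0]; simpl in H;
      try (destruct (Rle_dec _ _); simpl in H); try discriminate;
      inversion H; subst; split; eauto 10.
    + inversion H; subst. eauto.
    + discriminate.
    + inversion H; subst. eauto.
    + discriminate.
Qed.

Lemma trans_recv gamma c b q i x M :
  b i = Some (x, M) ->
  let r := trans gamma c b (SRecv q i) in
  incl (msg_ev M) (changes (st (fst r) q)) /\
  match M with
  | MEnter y => snd r = Some (q, MEnterEcho (changes (st c q) ++ [EvEnter y]) (is_joined (st c q)) y)
  | MJoined y => snd r = Some (q, MJoinedEcho y)
  | MLeave y => snd r = Some (q, MLeaveEcho y)
  | _ => True
  end.
Proof.
  intros Hb. simpl. rewrite Hb. unfold recv.
  destruct M; simpl; unfold upd; rewrite ?Nat.eqb_refl; simpl.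
  - split; auto. intros e [<-|[]]. apply in_or_app; simpl; auto.
  - destruct (negb (is_joined (st c q)) && Nat.eqb n q).
    + destruct (join_bound (st c q)); [|destruct b0]; simpl;
      try (destruct (Rle_dec _ _); simpl); unfold upd; rewrite ?Nat.eqb_refl; simpl;
      split; auto; intros e He; rewrite ?in_app_iff; auto.
    + simpl. unfold upd. rewrite Nat.eqb_refl. simpl. split; auto. intros e He; rewrite ?in_app_iff; auto.
  - split; auto. intros e [<-|[]]. apply in_or_app; simpl; auto.
  - split; auto. intros e [<-|[]]. apply in_or_app; simpl; auto.
  - split; auto. intros e [<-|[]]. apply in_or_app; simpl; auto.
  - split; auto. intros e [<-|[]]. apply in_or_app; simpl; auto.
Qed.


Definition is_erc (b : nat -> option (Node * Msg)) (s : Step) (q : Node) : bool :=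
  match s with
  | SRecv q' i => Nat.eqb q' q && match b i with Some (_, MEnterEcho _ _ y) => Nat.eqb y q | _ => false end
  | _ => false
  end.

Ltac trans_cases :=
  simpl; unfold recv; repeat (match goal with |- context [match ?x with _ => _ end] => destruct x eqn:? end; simpl);
  unfold upd in *; simpl in *.

Lemma trans_echo gamma c b s q :
  (echo_count (st (fst (trans gamma c b s)) q) <= echo_count (st c q) + (if is_erc b s q then 1 else 0))%nat.
Proof.
  destruct s as [p|p|y r|p|n n0|]; simpl; unfold upd, add_changes; try (destruct (Nat.eqb_spec q p); subst; simpl; lia); try (destruct (Nat.eqb_spec q r); subst; simpl; lia); try lia.
  destruct (b n0) as [[x m]|] eqn:Eb; simpl; [|lia].
  unfold recv. destruct m; simpl; unfold upd; try (destruct (Nat.eqb_spec q n); subst; simpl; lia).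
  destruct (negb (is_joined (st c n)) && Nat.eqb n1 n) eqn:E.
  - apply andb_true_iff in E. destruct E as [_ E2]. apply Nat.eqb_eq in E2. subst n1.
    destruct (join_bound (st c n)); [|destruct b0]; simpl;
      try (destruct (Rle_dec _ _); simpl); unfold upd;
      destruct (Nat.eqb_spec q n); subst; simpl; rewrite ?Nat.eqb_refl; simpl; lia.
  - simpl. unfold upd. destruct (Nat.eqb_spec q n); subst; simpl; lia.
Qed.

Lemma trans_join gamma c b s q :
  is_joined (st c q) = false -> is_joined (st (fst (trans gamma c b s)) q) = true ->
  (exists i x Cc j, s = SRecv q i /\ b i = Some (x, MEnterEcho Cc j q)) /\
  snd (trans gamma c b s) = Some (q, MJoined q) /\
  In (EvJoin q) (changes (st (fst (trans gamma c b s)) q)) /\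
  exists bb, join_bound (st (fst (trans gamma c b s)) q) = Some bb /\
     bb <= INR (echo_count (st (fst (trans gamma c b s)) q)).
Proof.
  intros H0 H1. destruct s as [p|p|y r|p|n n0|]; simpl in *; unfold upd, add_changes in *;
    try (destruct (Nat.eqb_spec q p); subst; simpl in *; congruence);
    try (destruct (Nat.eqb_spec q r); subst; simpl in *; congruence); try congruence.
  destruct (b n0) as [[x m]|] eqn:Eb; simpl in *; [|congruence].
  unfold recv in *. destruct m; simpl in *; unfold upd in *;
    try (destruct (Nat.eqb_spec q n); subst; simpl in *; congruence).
  destruct (negb (is_joined (st c n)) && Nat.eqb n1 n) eqn:E.
  - apply andb_true_iff in E. destruct E as [_ E2]. apply Nat.eqb_eq in E2. subst n1.
    destruct (join_bound (st c n)) eqn:Ej; [|destruct b0]; simpl in *;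
      try (destruct (Rle_dec _ _); simpl in *); unfold upd in *;
      destruct (Nat.eqb_spec q n); subst; simpl in *; try congruence;
      (split; [eauto 10|]; split; [auto|]; split; [apply in_or_app; simpl; auto|]; eexists; split; [reflexivity|auto]).
  - simpl in *. unfold upd in *. destruct (Nat.eqb_spec q n); subst; simpl in *; congruence.
Qed.

Lemma trans_jb gamma c b s q bb :
  join_bound (st c q) = None -> join_bound (st (fst (trans gamma c b s)) q) = Some bb ->
  exists i x Cc, s = SRecv q i /\ b i = Some (x, MEnterEcho Cc true q) /\
     bb = gamma * INR (length (present_in (changes (st c q) ++ Cc))).
Proof.
  intros H0 H1. destruct s as [p|p|y r|p|n n0|]; simpl in *; unfold upd, add_changes in *;
    try (destruct (Nat.eqb_spec q p); subst; simpl in *; congruence);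
    try (destruct (Nat.eqb_spec q r); subst; simpl in *; congruence); try congruence.
  destruct (b n0) as [[x m]|] eqn:Eb; simpl in *; [|congruence].
  unfold recv in *. destruct m; simpl in *; unfold upd in *;
    try (destruct (Nat.eqb_spec q n); subst; simpl in *; congruence).
  destruct (negb (is_joined (st c n)) && Nat.eqb n1 n) eqn:E.
  - apply andb_true_iff in E. destruct E as [_ E2]. apply Nat.eqb_eq in E2. subst n1.
    destruct (join_bound (st c n)) eqn:Ej; [|destruct b0]; simpl in *;
      try (destruct (Rle_dec _ _); simpl in *); unfold upd in *;
      destruct (Nat.eqb_spec q n); subst; simpl in *; try congruence;
      inversion H1; subst; eauto 10.
  - simpl in *. unfold upd in *. destruct (Nat.eqb_spec q n); subst; simpl in *; congruence.
Qed.

Lemma trans_flag_origin gamma c b s y :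
  let c' := fst (trans gamma c b s) in
  (entered c' y = true -> entered c y = true \/ s = SEnter y) /\
  (has_left c' y = true -> has_left c y = true \/ s = SLeave y \/ exists r, s = SForcedLeave y r) /\
  (crashed c' y = true -> crashed c y = true \/ s = SCrash y).
Proof.
  destruct s as [p|p|x r|p|n n0|]; simpl; unfold upd;
  try (repeat split; intros H; destruct (Nat.eqb_spec y p); subst; eauto; fail).
  - repeat split; intros H; destruct (Nat.eqb_spec y x); subst; eauto.
  - unfold recv. destruct (b n0) as [[z m]|]; simpl; [|auto].
    destruct m; simpl; auto.
    destruct (negb (is_joined (st c n)) && Nat.eqb n1 n); simpl; auto.
    destruct (join_bound (st c n)); simpl; auto.
    + destruct (Rle_dec _ _); simpl; auto.
    + destruct b0; simpl; auto. destruct (Rle_dec _ _); simpl; auto.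
  - auto.
Qed.

Lemma trans_new gamma c b s z e :
  In e (changes (st (fst (trans gamma c b s)) z)) ->
  In e (changes (st c z)) \/ (s = SEnter z /\ e = EvEnter z) \/
  (exists y, s = SForcedLeave y z /\ e = EvLeave y) \/
  (exists i x M, s = SRecv z i /\ b i = Some (x, M) /\ (In e (msg_ev M) \/ e = EvJoin z)).
Proof.
  destruct s as [p|p|y r|p|n n0|]; simpl; unfold upd, add_changes; auto.
  - destruct (Nat.eqb_spec z p); subst; simpl; auto. rewrite in_app_iff. intros [h|[h|[]]]; auto.
  - destruct (Nat.eqb_spec z r); subst; simpl; auto. rewrite in_app_iff. intros [h|[h|[]]]; auto. right; right; left; exists y; auto.
  - destruct (b n0) as [[x m]|] eqn:Eb; simpl; auto. unfold recv.
    destruct m; simpl; unfold upd, add_changes;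
    try (destruct (Nat.eqb_spec z n); subst; simpl; auto; rewrite in_app_iff; intros [h|h]; auto;
         right; right; right; exists n0, x; eexists; split; [reflexivity|]; split; [eauto|]; simpl; auto; fail).
    destruct (negb (is_joined (st c n)) && Nat.eqb n1 n).
    + destruct (join_bound (st c n)); [|destruct b0]; simpl;
      try (destruct (Rle_dec _ _); simpl); unfold upd;
      destruct (Nat.eqb_spec z n); subst; simpl; auto; intros h; rewrite ?in_app_iff in h; simpl in h;
      (decompose [or] h; [left; assumption| ..]);
      right; right; right; exists n0, x; eexists; (split; [reflexivity|]); (split; [eauto|]); simpl; intuition congruence.
    + simpl; unfold upd. destruct (Nat.eqb_spec z n); subst; simpl; auto. rewrite in_app_iff. intros [h|h]; auto.
      right; right; right; exists n0, x; eexists; (split; [reflexivity|]); (split; [eauto|]); simpl; auto.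
Qed.
Section Sem.
Variables (gamma : R) (S0 : list Node) (sched : nat -> Step).
Definition cf n := cfg gamma S0 sched n.
Definition bc i := bcast gamma S0 sched i.
Definition bcf n := snd (run gamma S0 sched n).

Lemma cf_S n : cf (S n) = fst (trans gamma (cf n) (bcf n) (sched n)).
Proof. unfold cf, cfg, bcf. simpl. destruct (run gamma S0 sched n) as [c b]. simpl.
  destruct (trans gamma c b (sched n)). reflexivity. Qed.

Lemma bc_def n : bc n = snd (trans gamma (cf n) (bcf n) (sched n)).
Proof. unfold bc, bcast, cf, cfg, bcf. simpl. destruct (run gamma S0 sched n) as [c b]. simpl.
  destruct (trans gamma c b (sched n)). simpl. rewrite Nat.eqb_refl. reflexivity. Qed.

Lemma bcf_lt n i : (i < n)%nat -> bcf n i = bc i.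
Proof. induction n; intros H. lia.
  unfold bcf in *. simpl. destruct (run gamma S0 sched n) as [c b] eqn:E. simpl in *.
  destruct (trans gamma c b (sched n)) as [c' o] eqn:E2. simpl.
  destruct (Nat.eqb_spec i n).
  - subst. unfold bc, bcast. simpl. rewrite E, E2. simpl. rewrite Nat.eqb_refl. reflexivity.
  - apply IHn. lia. Qed.

Lemma cf0 : cf 0 = init_config S0.
Proof. reflexivity. Qed.


Lemma cf_st_rel n : st_rel (cf n) (cf (S n)).
Proof. rewrite cf_S. apply trans_st. Qed.

Lemma changes_mono n m z e : (n <= m)%nat -> In e (changes (st (cf n) z)) -> In e (changes (st (cf m) z)).
Proof. intros H. induction H; auto. intros Hi. specialize (IHle Hi).
  destruct (cf_st_rel m) as [q [s' [H1 [[l H2] _]]]]. rewrite H1.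
  destruct (Nat.eqb_spec z q); subst; auto. rewrite H2. apply in_or_app; auto. Qed.

Lemma joined_mono n m z : (n <= m)%nat -> is_joined (st (cf n) z) = true -> is_joined (st (cf m) z) = true.
Proof. intros H. induction H; auto. intros Hi. specialize (IHle Hi).
  destruct (cf_st_rel m) as [q [s' [H1 [_ [H3 _]]]]]. rewrite H1.
  destruct (Nat.eqb_spec z q); subst; auto. Qed.

Lemma jb_mono n m z b : (n <= m)%nat -> join_bound (st (cf n) z) = Some b -> join_bound (st (cf m) z) = Some b.
Proof. intros H. induction H; auto. intros Hi. specialize (IHle Hi).
  destruct (cf_st_rel m) as [q [s' [H1 [_ [_ H4]]]]]. rewrite H1.
  destruct (Nat.eqb_spec z q); subst; auto. Qed.

Lemma flags_mono n m x : (n <= m)%nat ->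
  (entered (cf n) x = true -> entered (cf m) x = true) /\
  (has_left (cf n) x = true -> has_left (cf m) x = true) /\
  (crashed (cf n) x = true -> crashed (cf m) x = true).
Proof. intros H. induction H. tauto.
  rewrite cf_S. destruct (trans_flags gamma (cf m) (bcf m) (sched m) x) as [A [B C]]. tauto. Qed.

Lemma entered_mono n m x : (n <= m)%nat -> entered (cf n) x = true -> entered (cf m) x = true.
Proof. intros H; apply (flags_mono n m x H). Qed.
Lemma left_mono n m x : (n <= m)%nat -> has_left (cf n) x = true -> has_left (cf m) x = true.
Proof. intros H; apply (flags_mono n m x H). Qed.
Lemma crashed_mono n m x : (n <= m)%nat -> crashed (cf n) x = true -> crashed (cf m) x = true.
Proof. intros H; apply (flags_mono n m x H). Qed.

End Sem.

Section Main.
Variables (S0 : list Node) (sched : nat -> Step) (T : nat -> R)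
  (D alpha Delta gamma : R) (Nmin : nat).
Hypothesis HD : 0 < D.
Hypothesis Htime : time_ok T.
Hypothesis Hstep : forall n, step_ok gamma S0 sched T D n.
Hypothesis Hdel : delivery_ok gamma S0 sched T D.
Hypothesis HNmin : Nmin_ok gamma S0 sched T Nmin.
Hypothesis Hchurn : churn_ok gamma S0 sched T D alpha.
Hypothesis Hfail : failures_ok gamma S0 sched T Delta.
Hypothesis Ha0 : 0 <= alpha.
Hypothesis Ha1 : alpha <= 1 - Rpower 2 (- (1 / 4)).
Hypothesis Hd0 : 0 <= Delta.
Hypothesis HNp : 1 < ((1 - alpha) ^ 3 - Delta * (1 + alpha) ^ 3) * INR Nmin.
Hypothesis Hg : gamma >= 1 / (INR Nmin * (1 - alpha) ^ 3) + (1 + Delta) * (1 + alpha) ^ 3 / (1 - alpha) ^ 3 - 1.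

Notation C n := (cf gamma S0 sched n).
Notation B i := (bc gamma S0 sched i).

Lemma T_mono i j : (i <= j)%nat -> T i <= T j.
Proof. destruct Htime as [_ [H _]]. auto. Qed.
Lemma T_pos i : 0 < T i.
Proof. destruct Htime as [H0 [H _]]. pose proof (H 0%nat i ltac:(lia)). lra. Qed.

Lemma T_lt_idx i j : T i < T j -> (i < j)%nat.
Proof. intros H. destruct (le_lt_dec j i); auto. pose proof (T_mono j i l). lra. Qed.

Lemma cut_iff t n : cut T t n -> forall j, (j < n)%nat <-> T j <= t.
Proof. intros [H1 H2] j. split; auto. intros Hj. destruct (le_lt_dec n j); auto.
  pose proof (T_mono n j l). lra. Qed.

Lemma cut_unique t n m : cut T t n -> cut T t m -> n = m.
Proof. intros H1 H2. pose proof (cut_iff t n H1) as A. pose proof (cut_iff t m H2) as B'.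
  destruct (lt_eq_lt_dec n m) as [[h|h]|h]; auto.
  - apply B' in h. apply A in h. lia.
  - apply A in h. apply B' in h. lia. Qed.

Lemma cut_exists t : exists n, cut T t n.
Proof. destruct Htime as [_ [_ Hu]]. destruct (Hu t) as [N HN].
  induction N.
  - exists 0%nat. split; [intros; lia| auto].
  - destruct (Rlt_le_dec t (T N)) as [h|h]; auto.
    exists (S N). split; auto. intros k Hk. pose proof (T_mono k N ltac:(lia)). lra. Qed.

Lemma cutlt_exists b : exists n, forall j, (j < n)%nat <-> T j < b.
Proof. destruct Htime as [_ [_ Hu]]. destruct (Hu b) as [N HN].
  assert (HN' : b <= T N) by lra. clear HN.
  induction N.
  - exists 0%nat. intros j; split; intros h; [lia|]. pose proof (T_mono 0 j ltac:(lia)). lra.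
  - destruct (Rlt_le_dec (T N) b) as [h|h]; auto.
    exists (S N). intros j. split; intros h2.
    + pose proof (T_mono j N ltac:(lia)). lra.
    + destruct (le_lt_dec (S N) j); [|lia]. pose proof (T_mono (S N) j l). lra. Qed.


Lemma step_recv_ok n q i : sched n = SRecv q i -> (i < n)%nat /\
  (exists s m, B i = Some (s, m) /\ s <> q) /\ active (C n) q = true /\ T n <= T i + D /\
  (forall k, (k < n)%nat -> sched k <> SRecv q i).
Proof. intros H. pose proof (Hstep n) as Hs. unfold step_ok in Hs. rewrite H in Hs.
  destruct Hs as [h1 [h2 [h3 [h4 [h5 _]]]]]. repeat split; auto. Qed.

Lemma recv_unique n m q i : sched n = SRecv q i -> sched m = SRecv q i -> n = m.
Proof. intros H1 H2. destruct (lt_eq_lt_dec n m) as [[h|h]|h]; auto.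
  - destruct (step_recv_ok m q i H2) as [_ [_ [_ [_ h5]]]]. exfalso; apply (h5 n h H1).
  - destruct (step_recv_ok n q i H1) as [_ [_ [_ [_ h5]]]]. exfalso; apply (h5 m h H2). Qed.

Lemma bc_char n sg M : B n = Some (sg, M) ->
  match M with
  | MEnter y => sched n = SEnter y /\ sg = y
  | MEnterEcho Cc j y => exists i0 x, (i0 < n)%nat /\ sched n = SRecv sg i0 /\ B i0 = Some (x, MEnter y) /\
        Cc = changes (st (C n) sg) ++ [EvEnter y] /\ j = is_joined (st (C n) sg)
  | MJoined y => sg = y /\ exists i0 x Cc j, (i0 < n)%nat /\ sched n = SRecv y i0 /\ B i0 = Some (x, MEnterEcho Cc j y)
  | MJoinedEcho y => exists i0 x, (i0 < n)%nat /\ sched n = SRecv sg i0 /\ B i0 = Some (x, MJoined y)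
  | MLeave y => (sched n = SLeave y /\ sg = y) \/ sched n = SForcedLeave y sg
  | MLeaveEcho y => exists i0 x, (i0 < n)%nat /\ sched n = SRecv sg i0 /\ B i0 = Some (x, MLeave y)
  end.
Proof.
  intros H. unfold bc in H. rewrite bc_def in H. apply trans_out in H.
  destruct M; auto.
  - destruct H as [i0 [x [h1 [h2 h3]]]]. destruct (step_recv_ok n _ _ h1) as [hl _].
    rewrite bcf_lt in h2 by auto. exists i0, x. auto.
  - destruct H as [h0 [i0 [x [Cc [j [h1 h2]]]]]]. destruct (step_recv_ok n _ _ h1) as [hl _].
    rewrite bcf_lt in h2 by auto. split; auto. exists i0, x, Cc, j. auto.
  - destruct H as [i0 [x [h1 h2]]]. destruct (step_recv_ok n _ _ h1) as [hl _].
    rewrite bcf_lt in h2 by auto. exists i0, x. auto.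
  - destruct H as [i0 [x [h1 h2]]]. destruct (step_recv_ok n _ _ h1) as [hl _].
    rewrite bcf_lt in h2 by auto. exists i0, x. auto.
Qed.

Lemma recv_eff n q i x M : sched n = SRecv q i -> B i = Some (x, M) ->
  incl (msg_ev M) (changes (st (C (S n)) q)) /\
  match M with
  | MEnter y => B n = Some (q, MEnterEcho (changes (st (C n) q) ++ [EvEnter y]) (is_joined (st (C n) q)) y)
  | MJoined y => B n = Some (q, MJoinedEcho y)
  | MLeave y => B n = Some (q, MLeaveEcho y)
  | _ => True
  end.
Proof. intros H1 H2. destruct (step_recv_ok n q i H1) as [hl _].
  assert (Hb : bcf gamma S0 sched n i = Some (x, M)) by (rewrite bcf_lt; auto).
  pose proof (trans_recv gamma (C n) (bcf gamma S0 sched n) q i x M Hb) as [A A'].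
  unfold bc. rewrite cf_S, bc_def, H1. split; auto. Qed.

Lemma enter_eff n y : sched n = SEnter y ->
  inS0 S0 y = false /\ entered (C n) y = false /\ entered (C (S n)) y = true /\
  In (EvEnter y) (changes (st (C (S n)) y)) /\ B n = Some (y, MEnter y).
Proof. intros H. pose proof (Hstep n) as Hs. unfold step_ok in Hs. rewrite H in Hs.
  destruct Hs as [h1 h2]. unfold bc. rewrite cf_S, bc_def, H. simpl. unfold upd. rewrite Nat.eqb_refl.
  simpl. repeat split; auto. apply in_or_app; simpl; auto. Qed.

Lemma leave_eff n y : sched n = SLeave y ->
  active (C n) y = true /\ has_left (C (S n)) y = true /\ B n = Some (y, MLeave y).
Proof. intros H. pose proof (Hstep n) as Hs. unfold step_ok in Hs. rewrite H in Hs.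
  unfold bc. rewrite cf_S, bc_def, H. simpl. unfold upd. rewrite Nat.eqb_refl. auto. Qed.

Lemma fleave_eff n y r : sched n = SForcedLeave y r ->
  active (C n) r = true /\ r <> y /\ has_left (C (S n)) y = true /\
  In (EvLeave y) (changes (st (C (S n)) r)) /\ B n = Some (r, MLeave y).
Proof. intros H. pose proof (Hstep n) as Hs. unfold step_ok in Hs. rewrite H in Hs.
  destruct Hs as [h1 [h2 [h3 h4]]].
  unfold bc. rewrite cf_S, bc_def, H. simpl. unfold upd. rewrite !Nat.eqb_refl. simpl.
  repeat split; auto. apply in_or_app; simpl; auto. Qed.

Lemma crash_eff n y : sched n = SCrash y -> crashed (C (S n)) y = true.
Proof. intros H. rewrite cf_S, H. simpl. unfold upd. rewrite Nat.eqb_refl. auto. Qed.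

Lemma entered_char n y : entered (C n) y = true -> inS0 S0 y = true \/ exists j, (j < n)%nat /\ sched j = SEnter y.
Proof. induction n; intros H. left. exact H.
  rewrite cf_S in H. destruct (trans_flag_origin gamma (C n) (bcf gamma S0 sched n) (sched n) y) as [A _].
  destruct (A H) as [h|h]. destruct (IHn h) as [h'|[j [hj hj']]]; auto. right; exists j; split; auto.
  right; exists n; split; auto. Qed.

Lemma left_char n y : has_left (C n) y = true -> exists j, (j < n)%nat /\ (sched j = SLeave y \/ exists r, sched j = SForcedLeave y r).
Proof. induction n; intros H. simpl in H; discriminate.
  rewrite cf_S in H. destruct (trans_flag_origin gamma (C n) (bcf gamma S0 sched n) (sched n) y) as [_ [A _]].
  destruct (A H) as [h|h]. destruct (IHn h) as [j [hj hj']]. exists j; split; auto.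
  exists n; split; auto. Qed.

Lemma crashed_char n y : crashed (C n) y = true -> exists j, (j < n)%nat /\ sched j = SCrash y.
Proof. induction n; intros H. simpl in H; discriminate.
  rewrite cf_S in H. destruct (trans_flag_origin gamma (C n) (bcf gamma S0 sched n) (sched n) y) as [_ [_ A]].
  destruct (A H) as [h|h]. destruct (IHn h) as [j [hj hj']]. exists j; split; auto.
  exists n; split; auto. Qed.

Lemma enter_unique j1 j2 y : sched j1 = SEnter y -> sched j2 = SEnter y -> j1 = j2.
Proof. intros H1 H2.
  assert (K : forall a b, (a < b)%nat -> sched a = SEnter y -> sched b = SEnter y -> False).
  { intros a b h ha hb. destruct (enter_eff a y ha) as [_ [_ [h3 _]]].
    destruct (enter_eff b y hb) as [_ [h4 _]]. rewrite (entered_mono gamma S0 sched (S a) b y ltac:(lia) h3) in h4. discriminate. }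
  destruct (lt_eq_lt_dec j1 j2) as [[h|h]|h]; auto; exfalso; eauto. Qed.

Lemma joins_eff q k : joins_at gamma S0 sched q k ->
  (exists i x Cc j, sched k = SRecv q i /\ B i = Some (x, MEnterEcho Cc j q)) /\
  B k = Some (q, MJoined q) /\ In (EvJoin q) (changes (st (C (S k)) q)) /\
  exists bb, join_bound (st (C (S k)) q) = Some bb /\ bb <= INR (echo_count (st (C (S k)) q)).
Proof. intros [H0 H1]. change (cfg gamma S0 sched (S k)) with (C (S k)) in H1. rewrite cf_S in H1 |- *.
  change (cfg gamma S0 sched k) with (C k) in H0.
  destruct (trans_join gamma (C k) (bcf gamma S0 sched k) (sched k) q H0 H1) as [[i [x [Cc [j [h1 h2]]]]] [h3 h4]].
  split. exists i, x, Cc, j. split; auto. destruct (step_recv_ok k q i h1) as [hl _]. rewrite <- bcf_lt with (n:=k); auto.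
  split; auto. unfold bc. rewrite bc_def. auto. Qed.

Lemma jb_origin n q bb : join_bound (st (C n) q) = Some bb ->
  exists u, (u < n)%nat /\ join_bound (st (C u) q) = None /\ exists i x Cc, sched u = SRecv q i /\
   B i = Some (x, MEnterEcho Cc true q) /\ bb = gamma * INR (length (present_in (changes (st (C u) q) ++ Cc))).
Proof. induction n; intros H.
  - simpl in H. unfold init_state in H. destruct (inS0 S0 q); simpl in H; discriminate.
  - destruct (join_bound (st (C n) q)) as [b0|] eqn:E.
    + pose proof (jb_mono gamma S0 sched n (S n) q b0 ltac:(lia) E). assert (b0 = bb) by congruence. subst b0.
      destruct (IHn eq_refl) as [u [hu rest]]. exists u; split; auto.
    + exists n. split; auto. split; auto. rewrite cf_S in H.
      destruct (trans_jb gamma (C n) (bcf gamma S0 sched n) (sched n) q bb E H) as [i [x [Cc [h1 [h2 h3]]]]].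
      exists i, x, Cc. split; auto. destruct (step_recv_ok n q i h1) as [hl _]. split; auto.
      rewrite <- bcf_lt with (n:=n); auto. Qed.

Definition erc q j : bool := is_erc (bcf gamma S0 sched j) (sched j) q.

Lemma echo_count_bound n q : (echo_count (st (C n) q) <= length (filter (erc q) (seq 0 n)))%nat.
Proof. induction n.
  - simpl. unfold init_state. destruct (inS0 S0 q); simpl; lia.
  - rewrite seq_S, filter_app, length_app. simpl. rewrite cf_S.
    pose proof (trans_echo gamma (C n) (bcf gamma S0 sched n) (sched n) q). unfold erc at 2.
    destruct (is_erc _ _ _); simpl; lia. Qed.

Lemma erc_true q j : erc q j = true -> exists i x Cc b, sched j = SRecv q i /\ B i = Some (x, MEnterEcho Cc b q).
Proof. unfold erc, is_erc. destruct (sched j) eqn:E; try discriminate.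
  destruct (Nat.eqb_spec n q); [subst|discriminate]. simpl.
  destruct (step_recv_ok j q n0 E) as [hl _]. rewrite bcf_lt by auto.
  destruct (B n0) as [[x m]|] eqn:Eb; try discriminate. destruct m; try discriminate.
  intros h. apply Nat.eqb_eq in h. subst. eauto 10. Qed.

Lemma new_ev n z e : In e (changes (st (C (S n)) z)) ->
  In e (changes (st (C n) z)) \/ (sched n = SEnter z /\ e = EvEnter z) \/
  (exists y, sched n = SForcedLeave y z /\ e = EvLeave y) \/
  (exists i x M, (i < n)%nat /\ sched n = SRecv z i /\ B i = Some (x, M) /\ (In e (msg_ev M) \/ e = EvJoin z)).
Proof. rewrite cf_S. intros H. apply trans_new in H.
  destruct H as [h|[h|[h|[i [x [M [h1 [h2 h3]]]]]]]]; auto.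
  right; right; right. destruct (step_recv_ok n z i h1) as [hl _]. exists i, x, M.
  rewrite bcf_lt in h2 by auto. auto. Qed.

Lemma leave_real n : (forall z y, In (EvLeave y) (changes (st (C n) z)) -> has_left (C n) y = true) /\
  (forall i sg M y, (i < n)%nat -> B i = Some (sg, M) -> In (EvLeave y) (msg_ev M) -> has_left (C n) y = true).
Proof. induction n.
  - split.
    + intros z y H. simpl in H. unfold init_state in H. destruct (inS0 S0 z); simpl in H; [|contradiction].
      exfalso. clear -H. induction S0; simpl in H; auto. destruct H as [h|[h|h]]; try discriminate; auto.
    + intros; lia.
  - destruct IHn as [IH1 IH2].
    assert (IH2' : forall i sg M y, (i <= n)%nat -> B i = Some (sg, M) -> In (EvLeave y) (msg_ev M) -> has_left (C (S n)) y = true).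
    { intros i sg M y hi hB hin. destruct (Nat.eq_dec i n).
      - subst i. pose proof (bc_char n sg M hB) as hc. destruct M; simpl in hin.
        + destruct hin as [h|[]]; discriminate.
        + destruct hc as [i0 [x [_ [_ [_ [hC _]]]]]]. subst l. rewrite in_app_iff in hin. destruct hin as [h|[h|[]]]; [|discriminate].
          apply (left_mono gamma S0 sched n); eauto.
        + destruct hin as [h|[]]; discriminate.
        + destruct hin as [h|[]]; discriminate.
        + destruct hin as [h|[]]; inversion h; subst. destruct hc as [[h1 _]|h1].
          apply (leave_eff n y h1). apply (fleave_eff n y sg h1).
        + destruct hin as [h|[]]; inversion h; subst. destruct hc as [i0 [x [hl [_ hb]]]].
          apply (left_mono gamma S0 sched n); auto. apply (IH2 i0 x (MLeave y) y); simpl; auto.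
      - apply (left_mono gamma S0 sched n); auto. apply (IH2 i sg M y); auto. lia. }
    split; auto.
    + intros z y H. apply new_ev in H. destruct H as [h|[[h1 h2]|[[y' [h1 h2]]|[i [x [M [hl [h1 [h2 [h3|h3]]]]]]]]]].
      * apply (left_mono gamma S0 sched n); eauto.
      * discriminate.
      * injection h2 as h2. subst. destruct (fleave_eff n _ z h1) as [_ [_ [hh _]]]; exact hh.
      * apply (IH2' i x M y); auto. lia.
      * discriminate.
    + intros i sg M y hi. apply IH2'. lia.
Qed.

Lemma init_S0_changes y z : inS0 S0 z = true -> inS0 S0 y = true ->
  In (EvEnter y) (changes (init_state S0 z)).
Proof. intros hz hy. unfold init_state. rewrite hz. simpl.
  unfold inS0 in hy. apply existsb_exists in hy. destruct hy as [y' [hy' he]]. apply Nat.eqb_eq in he. subst.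
  apply in_flat_map. exists y'. simpl; auto. Qed.

Lemma s0_known n : (forall z, (is_joined (st (C n) z) = true \/ join_bound (st (C n) z) <> None) ->
     forall y, inS0 S0 y = true -> In (EvEnter y) (changes (st (C n) z))) /\
  (forall i sg Cc y' y, (i < n)%nat -> B i = Some (sg, MEnterEcho Cc true y') -> inS0 S0 y = true -> In (EvEnter y) Cc).
Proof. induction n.
  - split.
    + intros z hz y hy. simpl. destruct (inS0 S0 z) eqn:E.
      * apply init_S0_changes; auto.
      * exfalso. simpl in hz. unfold init_state in hz. rewrite E in hz. simpl in hz. destruct hz; congruence.
    + intros; lia.
  - destruct IHn as [IH1 IH2].
    assert (IH2' : forall i sg Cc y' y, (i <= n)%nat -> B i = Some (sg, MEnterEcho Cc true y') -> inS0 S0 y = true -> In (EvEnter y) Cc).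
    { intros i sg Cc y' y hi hB hy. destruct (Nat.eq_dec i n).
      - subst i. pose proof (bc_char n sg _ hB) as hc. destruct hc as [i0 [x [_ [_ [_ [hC hj]]]]]].
        subst Cc. apply in_or_app. left. apply IH1; auto.
      - apply (IH2 i sg Cc y' y); auto. lia. }
    split; auto.
    + intros z hz y hy.
      destruct (is_joined (st (C n) z)) eqn:Ej.
      { apply (changes_mono gamma S0 sched n); auto. }
      destruct (join_bound (st (C n) z)) as [b0|] eqn:Ejb.
      { apply (changes_mono gamma S0 sched n); auto. apply IH1; auto. right; congruence. }
      assert (exists bb, join_bound (st (C (S n)) z) = Some bb) as [bb Hbb].
      { destruct hz as [hz|hz].
        - rewrite cf_S in hz. destruct (trans_join gamma (C n) _ (sched n) z Ej hz) as [_ [_ [_ [bb [h _]]]]].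
          rewrite cf_S. eauto.
        - destruct (join_bound (st (C (S n)) z)); eauto. congruence. }
      pose proof Hbb as Hbb'. rewrite cf_S in Hbb'.
      destruct (trans_jb gamma (C n) _ (sched n) z bb Ejb Hbb') as [i [x [Cc [h1 [h2 _]]]]].
      destruct (step_recv_ok n z i h1) as [hl _]. rewrite bcf_lt in h2 by auto.
      destruct (recv_eff n z i x _ h1 h2) as [hinc _]. apply hinc. simpl. apply (IH2 i x Cc z y); auto.
    + intros i sg Cc y' y hi. apply IH2'. lia.
Qed.

Lemma active_at_iff t q n : cut T t n -> (active_at gamma S0 sched T q t <-> active (C n) q = true).
Proof. intros H. split.
  - intros [n' [h1 h2]]. rewrite (cut_unique t n n' H h1). exact h2.
  - intros h. exists n. split; auto. Qed.

Lemma active_split c q : active c q = true <-> entered c q = true /\ has_left c q = false /\ crashed c q = false.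
Proof. unfold active, present. destruct (entered c q), (has_left c q), (crashed c q); simpl; intuition congruence. Qed.

Lemma active_interval n m q : (n <= m)%nat -> active (C m) q = true -> entered (C n) q = true -> active (C n) q = true.
Proof. intros hnm ha he. apply active_split in ha. destruct ha as [_ [hl hc]]. apply active_split.
  split; auto. split.
  - destruct (has_left (C n) q) eqn:E; auto. rewrite (left_mono gamma S0 sched n m q hnm E) in hl. discriminate.
  - destruct (crashed (C n) q) eqn:E; auto. rewrite (crashed_mono gamma S0 sched n m q hnm E) in hc. discriminate.
Qed.

Lemma entered_from n q : (inS0 S0 q = true \/ exists e, (e < n)%nat /\ sched e = SEnter q) -> entered (C n) q = true.
Proof. intros [h|[e [he hs]]].
  - apply (entered_mono gamma S0 sched 0 n q ltac:(lia)). exact h.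
  - apply (entered_mono gamma S0 sched (S e) n q ltac:(lia)). apply (enter_eff e q hs). Qed.

Lemma deliver i sg M q m : B i = Some (sg, M) -> q <> sg -> active (C m) q = true -> T i + D < T m ->
  (inS0 S0 q = true \/ exists e, sched e = SEnter q /\ T e <= T i) ->
  exists j, sched j = SRecv q i /\ T j <= T i + D /\ (i < j)%nat /\ (j < m)%nat.
Proof. intros hB hq ha hT hent.
  destruct (Hdel i sg M hB q hq) as [j [hj1 hj2]].
  - intros t' [ht1 ht2]. destruct (cut_exists t') as [n' hn']. apply (active_at_iff t' q n' hn').
    assert (hn'm : (n' <= m)%nat).
    { destruct (le_lt_dec n' m); auto. apply (cut_iff t' n' hn') in l. lra. }
    apply (active_interval n' m q hn'm ha). apply entered_from.
    destruct hent as [h|[e [he1 he2]]]; auto. right. exists e. split; auto.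
    apply (cut_iff t' n' hn'). lra.
  - exists j. split; auto. split; auto. destruct (step_recv_ok j q i hj1) as [hl _]. split; auto.
    apply T_lt_idx. lra.
Qed.

Definition orig_ok k ev sg M : Prop :=
  B k = Some (sg, M) /\ In ev (msg_ev M) /\
  (In ev (changes (st (C (S k)) sg)) \/ has_left (C (S k)) sg = true) /\
  (forall j q, sched j = SRecv q k -> exists M', B j = Some (q, M') /\ In ev (msg_ev M')).

Lemma orig k ev : event_at gamma S0 sched k ev -> exists sg M, orig_ok k ev sg M.
Proof. destruct ev as [q|q|q]; simpl; intros H.
  - destruct (enter_eff k q H) as [_ [_ [_ [h4 h5]]]]. exists q, (MEnter q). split; auto. split; simpl; auto.
    split; auto. intros j q' hj. destruct (recv_eff j q' k q _ hj h5) as [_ h]. simpl in h.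
    eexists; split; [exact h|]. simpl. apply in_or_app; simpl; auto.
  - destruct (joins_eff q k H) as [_ [h2 [h3 _]]]. exists q, (MJoined q). split; auto. split; simpl; auto.
    split; auto. intros j q' hj. destruct (recv_eff j q' k q _ hj h2) as [_ h]. simpl in h.
    eexists; split; [exact h|]. simpl; auto.
  - destruct H as [H|[r H]].
    + destruct (leave_eff k q H) as [_ [h2 h3]]. exists q, (MLeave q). split; auto. split; simpl; auto.
      split; auto. intros j q' hj. destruct (recv_eff j q' k q _ hj h3) as [_ h]. simpl in h.
      eexists; split; [exact h|]. simpl; auto.
    + destruct (fleave_eff k q r H) as [_ [_ [_ [h4 h5]]]]. exists r, (MLeave q). split; auto. split; simpl; auto.
      split; auto. intros j q' hj. destruct (recv_eff j q' k r _ hj h5) as [_ h]. simpl in h.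
      eexists; split; [exact h|]. simpl; auto.
Qed.

Definition knows m r := forall k ev, event_at gamma S0 sched k ev -> T k + 2 * D < T m ->
  In ev (changes (st (C m) r)).

Definition Gm m := forall r, active (C m) r = true ->
  (inS0 S0 r = true \/ is_joined (st (C m) r) = true) -> knows m r.

Lemma recv_know j q i x M ev : sched j = SRecv q i -> B i = Some (x, M) -> In ev (msg_ev M) ->
  forall m, (S j <= m)%nat -> In ev (changes (st (C m) q)).
Proof. intros h1 h2 h3 m hm. apply (changes_mono gamma S0 sched (S j)); auto.
  apply (recv_eff j q i x M h1 h2); auto. Qed.


Lemma len3 (l a b c : list Node) : NoDup l -> (forall y, In y l -> In y a \/ In y b \/ In y c) ->
  (length l <= length a + length b + length c)%nat.
Proof. intros hl hin. rewrite <- !length_app, <- app_assoc. apply NoDup_incl_length; auto.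
  intros y hy. rewrite !in_app_iff. auto. Qed.

Lemma len2 (l a b : list Node) : NoDup l -> (forall y, In y l -> In y a \/ In y b) ->
  (length l <= length a + length b)%nat.
Proof. intros hl hin. rewrite <- !length_app. apply NoDup_incl_length; auto.
  intros y hy. rewrite !in_app_iff. auto. Qed.

Lemma filter_split_len {A} (f : A -> bool) l :
  (length (filter f l) + length (filter (fun x => negb (f x)) l))%nat = length l.
Proof. induction l; simpl; auto. destruct (f a); simpl; lia. Qed.

Definition ent_at j : list Node := match sched j with SEnter y => [y] | _ => [] end.
Definition Ew n1 n2 := flat_map ent_at (seq n1 (n2 - n1)).
Definition univ n := S0 ++ Ew 0 n.
Definition pres n := nodup Nat.eq_dec (filter (fun y => present (C n) y) (univ n)).
Definition XL n1 n2 := filter (fun y => has_left (C n2) y) (pres n1).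

Lemma In_Ew y n1 n2 : In y (Ew n1 n2) <-> exists j, (n1 <= j < n2)%nat /\ sched j = SEnter y.
Proof. unfold Ew. rewrite in_flat_map. split.
  - intros [j [hj hy]]. apply in_seq in hj. exists j. split; [lia|].
    unfold ent_at in hy. destruct (sched j); simpl in hy; try contradiction. destruct hy as [->|[]]; auto.
  - intros [j [hj hs]]. exists j. split. apply in_seq. lia. unfold ent_at. rewrite hs. simpl; auto. Qed.

Lemma NoDup_Ew n1 n2 : NoDup (Ew n1 n2).
Proof. unfold Ew. remember (n2 - n1)%nat as k. clear Heqk. induction k.
  - simpl. constructor.
  - rewrite seq_S, flat_map_app. apply NoDup_app; auto.
    + simpl. rewrite app_nil_r. unfold ent_at. destruct (sched (n1 + k)); repeat constructor; simpl; auto.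
    + intros y hy hy2. simpl in hy2. rewrite app_nil_r in hy2. unfold ent_at in hy2.
      destruct (sched (n1 + k)) eqn:E; simpl in hy2; try contradiction. destruct hy2 as [<-|[]].
      apply in_flat_map in hy. destruct hy as [j [hj hy]]. apply in_seq in hj.
      unfold ent_at in hy. destruct (sched j) eqn:E2; simpl in hy; try contradiction. destruct hy as [<-|[]].
      pose proof (enter_unique j (n1 + k) _ E2 E). lia.
Qed.

Lemma pres_spec n y : In y (pres n) <-> present (C n) y = true.
Proof. unfold pres. rewrite nodup_In, filter_In. split; [tauto|]. intros h. split; auto.
  unfold univ. apply in_or_app. unfold present in h. apply andb_true_iff in h. destruct h as [he _].
  destruct (entered_char n y he) as [h|[j [hj hs]]].
  - left. unfold inS0 in h. apply existsb_exists in h. destruct h as [y' [h1 h2]]. apply Nat.eqb_eq in h2. subst; auto.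
  - right. apply In_Ew. exists j. split; [lia|auto]. Qed.

Lemma NoDup_pres n : NoDup (pres n).
Proof. apply NoDup_nodup. Qed.

Lemma card_pres n : card_pred (fun q => present (cfg gamma S0 sched n) q = true) (length (pres n)).
Proof. exists (pres n). split. apply NoDup_pres. split; auto. intros q. apply pres_spec. Qed.

Lemma Ew_split n1 n2 n3 : (n1 <= n2 <= n3)%nat -> length (Ew n1 n3) = (length (Ew n1 n2) + length (Ew n2 n3))%nat.
Proof. intros h. unfold Ew. replace (n3 - n1)%nat with ((n2 - n1) + (n3 - n2))%nat by lia.
  rewrite seq_app, flat_map_app, length_app. replace (n1 + (n2 - n1))%nat with n2 by lia. auto. Qed.

Lemma Ew_mono n1 n2 n3 : (n1 <= n2 <= n3)%nat -> (length (Ew n1 n2) <= length (Ew n1 n3))%nat.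
Proof. intros h. rewrite (Ew_split n1 n2 n3 h). lia. Qed.

Lemma present_split c y : present c y = true <-> entered c y = true /\ has_left c y = false.
Proof. unfold present. destruct (entered c y), (has_left c y); simpl; intuition congruence. Qed.

Lemma pop_change n1 n2 : (n1 <= n2)%nat ->
  (length (pres n2) + length (XL n1 n2) <= length (pres n1) + length (Ew n1 n2))%nat.
Proof. intros h.
  assert (H : (length (pres n2) <= length (filter (fun y => negb (has_left (C n2) y)) (pres n1)) + length (Ew n1 n2))%nat).
  { apply len2. apply NoDup_pres. intros y hy. apply pres_spec in hy. apply present_split in hy. destruct hy as [he hl].
    destruct (entered (C n1) y) eqn:E1.
    - left. apply filter_In. split. apply pres_spec. apply present_split. split; auto.
      destruct (has_left (C n1) y) eqn:E2; auto. rewrite (left_mono gamma S0 sched n1 n2 y h E2) in hl. discriminate.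
      rewrite hl. auto.
    - right. apply In_Ew. destruct (entered_char n2 y he) as [h'|[j [hj hs]]].
      + rewrite (entered_mono gamma S0 sched 0 n1 y ltac:(lia) h') in E1. discriminate.
      + exists j. split; auto. split; auto. destruct (le_lt_dec n1 j); auto.
        destruct (enter_eff j y hs) as [_ [_ [h3 _]]]. rewrite (entered_mono gamma S0 sched (S j) n1 y ltac:(lia) h3) in E1. discriminate. }
  assert (E : (length (filter (fun y => has_left (C n2) y) (pres n1)) + length (filter (fun y => negb (has_left (C n2) y)) (pres n1)))%nat = length (pres n1)) by (apply (filter_split_len (fun y => has_left (C n2) y))). unfold XL. lia.
Qed.

Lemma XL_churn n1 n2 y : In y (XL n1 n2) -> exists j, (n1 <= j < n2)%nat /\ (sched j = SLeave y \/ exists r, sched j = SForcedLeave y r).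
Proof. unfold XL. rewrite filter_In. intros [hp hl]. apply pres_spec, present_split in hp. destruct hp as [_ hl1].
  destruct (left_char n2 y hl) as [j [hj hs]]. exists j. split; auto. split; auto.
  destruct (le_lt_dec n1 j); auto. exfalso.
  assert (has_left (C (S j)) y = true).
  { destruct hs as [hs|[r hs]]. apply (leave_eff j y hs). apply (fleave_eff j y r hs). }
  rewrite (left_mono gamma S0 sched (S j) n1 y ltac:(lia) H) in hl1. discriminate. Qed.

Lemma churn_win t nc n1 n2 : 0 <= t -> cut T t nc -> (n1 <= n2)%nat ->
  (forall j, (n1 <= j < n2)%nat -> t <= T j <= t + D) ->
  INR (length (Ew n1 n2) + length (XL n1 n2)) <= alpha * INR (length (pres nc)).
Proof. intros ht hc hn hT. rewrite <- length_app.
  apply (Hchurn t (length (pres nc)) ht).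
  - exists nc. split; auto. apply card_pres.
  - apply NoDup_app. apply NoDup_Ew. apply NoDup_filter, NoDup_pres.
    intros y hy hy2. apply In_Ew in hy. destruct hy as [j [hj hs]].
    unfold XL in hy2. apply filter_In in hy2. destruct hy2 as [hp _]. apply pres_spec, present_split in hp.
    destruct hp as [he _]. destruct (enter_eff j y hs) as [_ [h2 _]].
    rewrite (entered_mono gamma S0 sched n1 j y ltac:(lia) he) in h2. discriminate.
  - intros y hy. apply in_app_iff in hy. destruct hy as [hy|hy].
    + apply In_Ew in hy. destruct hy as [j [hj hs]]. exists j. split; auto.
    + destruct (XL_churn n1 n2 y hy) as [j [hj hs]]. exists j. split; auto.
Qed.

Lemma fail_win t nc : 0 <= t -> cut T t nc ->
  INR (length (filter (fun y => crashed (C nc) y) (pres nc))) <= Delta * INR (length (pres nc)).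
Proof. intros ht hc. apply (Hfail t nc (length (pres nc)) ht hc (card_pres nc)).
  apply NoDup_filter, NoDup_pres.
  intros x hx. apply filter_In in hx. destruct hx as [h1 h2]. apply pres_spec in h1. auto. Qed.

Lemma Nmin_win bb nb : 0 <= bb -> (forall j, (j < nb)%nat <-> T j < bb) -> (Nmin <= length (pres nb))%nat.
Proof. intros hb hn.
  assert (exists t0, 0 <= t0 /\ cut T t0 nb) as [t0 [h0 hc]].
  { destruct nb.
    - exists 0. split. lra. split. intros; lia. apply T_pos.
    - exists (T nb). split. left; apply T_pos. split.
      + intros k hk. apply T_mono. lia.
      + destruct (Rlt_le_dec (T nb) (T (S nb))) as [h|h]; auto.
        assert (T nb < bb) by (apply hn; lia).
        assert (~ (S nb < S nb)%nat) by lia. exfalso. apply H0. apply hn.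
        pose proof (T_mono nb (S nb) ltac:(lia)). lra. }
  apply (HNmin t0 (length (pres nb)) h0). exists nb. split; auto. apply card_pres. Qed.

Lemma cut_le t1 t2 n1 n2 : t1 <= t2 -> cut T t1 n1 -> cut T t2 n2 -> (n1 <= n2)%nat.
Proof. intros h h1 h2. destruct (le_lt_dec n1 n2); auto. exfalso.
  apply (cut_iff t1 n1 h1) in l. destruct h2 as [_ h2']. lra. Qed.

Lemma first_join m r : inS0 S0 r = false -> is_joined (st (C m) r) = true -> exists jr, (jr < m)%nat /\ joins_at gamma S0 sched r jr.
Proof. intros h0. induction m; intros h.
  - simpl in h. unfold init_state in h. rewrite h0 in h. simpl in h. discriminate.
  - destruct (is_joined (st (C m) r)) eqn:E.
    + destruct (IHm eq_refl) as [jr [h1 h2]]. exists jr; split; auto.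
    + exists m. split; auto. split; auto. Qed.

Lemma NoDup_map_inj (f : nat -> Node) l : NoDup l -> (forall a b, In a l -> In b l -> f a = f b -> a = b) -> NoDup (map f l).
Proof. induction l; intros h hi; simpl; constructor.
  - intros hin. apply in_map_iff in hin. destruct hin as [b [hb1 hb2]]. inversion h; subst.
    assert (b = a) by (apply hi; simpl; auto). subst. contradiction.
  - inversion h; subst. apply IHl; auto. intros a0 b0 h1 h2 h3. apply hi; simpl; auto. Qed.

Lemma entered_in_iff y l : In y (entered_in l) <-> In (EvEnter y) l.
Proof. unfold entered_in. rewrite in_flat_map. split.
  - intros [e [he hy]]. destruct e; simpl in hy; try contradiction. destruct hy as [<-|[]]; auto.
  - intros h. exists (EvEnter y). simpl; auto. Qed.

Lemma event_eqb_iff a b : event_eqb a b = true <-> a = b.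
Proof. destruct a, b; simpl; split; intros h; try discriminate; try (apply Nat.eqb_eq in h; subst; auto);
  try (inversion h; subst; apply Nat.eqb_refl). Qed.

Lemma mem_ev_iff e l : mem_ev e l = true <-> In e l.
Proof. unfold mem_ev. rewrite existsb_exists. split.
  - intros [x [h1 h2]]. apply event_eqb_iff in h2. subst; auto.
  - intros h. exists e. split; auto. apply event_eqb_iff; auto. Qed.

Lemma present_in_iff y l : In y (present_in l) <-> In (EvEnter y) l /\ ~ In (EvLeave y) l.
Proof. unfold present_in. rewrite nodup_In, filter_In, entered_in_iff. rewrite negb_true_iff.
  split; intros [h1 h2]; split; auto.
  - intros h. apply mem_ev_iff in h. congruence.
  - destruct (mem_ev (EvLeave y) l) eqn:E; auto. apply mem_ev_iff in E. contradiction. Qed.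

Definition sndr j : Node := match sched j with SRecv _ i => match B i with Some (x, _) => x | None => 0%nat end | _ => 0%nat end.

Lemma erc_info r j : erc r j = true -> exists i x Cc bq i0, sched j = SRecv r i /\ B i = Some (x, MEnterEcho Cc bq r) /\
  sndr j = x /\ sched i = SRecv x i0 /\ sched i0 = SEnter r /\ (i0 < i)%nat /\ Cc = changes (st (C i) x) ++ [EvEnter r].
Proof. intros h. destruct (erc_true r j h) as [i [x [Cc [bq [h1 h2]]]]].
  pose proof (bc_char i x _ h2) as hc. destruct hc as [i0 [x0 [hl [hs [hb [hC _]]]]]].
  pose proof (bc_char i0 x0 _ hb) as [hs0 _].
  exists i, x, Cc, bq, i0. unfold sndr. rewrite h1, h2. auto 10. Qed.

Lemma Sl_nodup r n : NoDup (map sndr (filter (erc r) (seq 0 n))).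
Proof. apply NoDup_map_inj. apply NoDup_filter, seq_NoDup.
  intros a b ha hb he. apply filter_In in ha. apply filter_In in hb.
  destruct (erc_info r a (proj2 ha)) as [i [x [Cc [bq [i0 [h1 [h2 [h3 [h4 [h5 _]]]]]]]]]].
  destruct (erc_info r b (proj2 hb)) as [i' [x' [Cc' [bq' [i0' [h1' [h2' [h3' [h4' [h5' _]]]]]]]]]].
  rewrite he in h3. rewrite h3 in h3'. subst x'.
  rewrite (enter_unique i0 i0' r h5 h5') in h4. rewrite (recv_unique i i' x i0' h4 h4') in h1.
  apply (recv_unique a b r i' h1 h1'). Qed.
Lemma count_case m r k ev sg M er :
  (forall m', (m' < m)%nat -> Gm m') ->
  inS0 S0 r = false -> active (C m) r = true -> is_joined (st (C m) r) = true ->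
  orig_ok k ev sg M -> event_at gamma S0 sched k ev ->
  sched er = SEnter r -> (er < m)%nat -> T k < T er ->
  (forall j q, sched j = SRecv q k -> (j < er)%nat) ->
  T k + 2 * D < T m ->
  ~ In ev (changes (st (C m) r)) -> False.
Proof.
  intros IH HS0 Hact Hjr Hor Hev Her Herm HTk Hrc HTm Hnot.
  destruct Hor as [HB [Hin [Hsg Hrcv]]].
  destruct (first_join m r HS0 Hjr) as [jr [hjr Hjoin]].
  destruct (joins_eff r jr Hjoin) as [_ [_ [_ [bb [Hbb Hbbc]]]]].
  destruct (jb_origin (S jr) r bb Hbb) as [u1 [hu1 [_ [i1 [w [Cw [Hu1s [Hi1 Hbbdef]]]]]]]].
  pose proof (bc_char i1 w _ Hi1) as [i0 [x0 [hi01 [Hi1s [Hi0 [HCw Hjw]]]]]].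
  pose proof (bc_char i0 x0 _ Hi0) as [Hi0s _].
  pose proof (enter_unique i0 er r Hi0s Her) as ->.
  destruct (step_recv_ok i1 w er Hi1s) as [_ [_ [Hwact [HTi1 _]]]].
  destruct (step_recv_ok u1 r i1 Hu1s) as [hi1u1 [_ [_ [HTu1 _]]]].
  assert (HCwr : forall e, In e Cw -> In e (changes (st (C m) r))).
  { intros e he. apply (recv_know u1 r i1 w _ e Hu1s Hi1); simpl; auto. lia. }
  assert (HGw : knows i1 w) by (apply (IH i1 ltac:(lia) w Hwact); right; auto).
  assert (HTkw : T i1 <= T k + 2 * D).
  { destruct (Rle_lt_dec (T i1) (T k + 2*D)) as [h|h]; auto. exfalso. apply Hnot. apply HCwr.
    rewrite HCw. apply in_or_app. left. unfold knows in HGw. apply (HGw k); auto. }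
  assert (HTer : T er <= T i1) by (apply T_mono; lia).
  assert (HTk0 : 0 < T k) by apply T_pos.
  set (a := T i1 - 2 * D).
  set (b := Rmax a 0).
  assert (hb0 : 0 <= b) by (unfold b; apply Rmax_r).
  assert (hba : a <= b) by (unfold b; apply Rmax_l).
  assert (hbk : b <= T k) by (unfold b, a; unfold Rmax; destruct (Rle_dec (T i1 - 2 * D) 0); lra).
  assert (hTjb : forall j, T j < b -> T j < a).
  { intros j hj. pose proof (T_pos j). unfold b in hj. unfold Rmax in hj. destruct (Rle_dec a 0); lra. }
  destruct (cutlt_exists b) as [nb Hnb].
  destruct (cut_exists b) as [c0 Hc0].
  destruct (cut_exists (b + D)) as [c1 Hc1].
  destruct (cut_exists (b + 2 * D)) as [c2 Hc2].
  destruct (cut_exists (b + 3 * D)) as [c3 Hc3].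
  destruct (cut_exists (T k + D)) as [cs Hcs].
  assert (hnb0 : (nb <= c0)%nat).
  { destruct (le_lt_dec nb c0); auto. apply Hnb in l. destruct Hc0 as [_ h]. lra. }
  assert (h01 : (c0 <= c1)%nat) by (apply (cut_le b (b + D)); auto; lra).
  assert (h12 : (c1 <= c2)%nat) by (apply (cut_le (b + D) (b + 2 * D)); auto; lra).
  assert (h23 : (c2 <= c3)%nat) by (apply (cut_le (b + 2 * D) (b + 3 * D)); auto; lra).
  assert (h1s : (c1 <= cs)%nat) by (apply (cut_le (b + D) (T k + D)); auto; lra).
  assert (hs3 : (cs <= c3)%nat) by (apply (cut_le (T k + D) (b + 3 * D)); auto; unfold a in hba; lra).
  assert (Hge_nb : forall j, b <= T j -> (nb <= j)%nat).
  { intros j hj. destruct (le_lt_dec nb j); auto. apply Hnb in l. lra. }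
  assert (Hlt_c3 : forall j, T j <= b + 3 * D -> (j < c3)%nat) by (intros j hj; apply (cut_iff _ _ Hc3); auto).
  assert (Hu1c3 : (u1 < c3)%nat) by (apply Hlt_c3; unfold a in hba; lra).
  assert (Hwin : forall t n1 n2 nc, 0 <= t -> cut T t nc -> (n1 <= n2)%nat ->
     (forall j, (n1 <= j)%nat -> t <= T j) -> cut T (t + D) n2 ->
     INR (length (Ew n1 n2) + length (XL n1 n2)) <= alpha * INR (length (pres nc))).
  { intros t n1 n2 nc ht hc hn hlow hc2. apply (churn_win t nc n1 n2 ht hc hn).
    intros j hj. split. apply hlow; lia. apply (cut_iff _ _ hc2). lia. }
  assert (F1 : INR (length (Ew nb c1) + length (XL nb c1)) <= alpha * INR (length (pres c0))).
  { apply (Hwin b nb c1 c0 hb0 Hc0); auto. lia.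
    intros j hj. destruct (Rle_lt_dec b (T j)); auto. apply Hnb in r0. lia. }
  assert (F2 : (length (pres c0) <= length (pres nb) + length (Ew nb c1))%nat).
  { pose proof (pop_change nb c0 hnb0). pose proof (Ew_mono nb c0 c1 ltac:(lia)). lia. }
  assert (F3 : (length (pres c1) + length (XL nb c1) <= length (pres nb) + length (Ew nb c1))%nat)
    by (apply pop_change; lia).
  assert (F4 : INR (length (Ew c1 c2) + length (XL c1 c2)) <= alpha * INR (length (pres c1))).
  { apply (Hwin (b + D) c1 c2 c1 ltac:(lra) Hc1); auto.
    intros j hj. destruct (Rle_lt_dec (T j) (b + D)) as [h|h]; [|lra]. apply (cut_iff _ _ Hc1) in h. lia.
    replace (b + D + D) with (b + 2 * D) by ring. auto. }
  assert (F5 : (length (pres c2) + length (XL c1 c2) <= length (pres c1) + length (Ew c1 c2))%nat)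
    by (apply pop_change; lia).
  assert (F6 : INR (length (Ew c2 c3) + length (XL c2 c3)) <= alpha * INR (length (pres c2))).
  { apply (Hwin (b + 2 * D) c2 c3 c2 ltac:(lra) Hc2); auto.
    intros j hj. destruct (Rle_lt_dec (T j) (b + 2 * D)) as [h|h]; [|lra]. apply (cut_iff _ _ Hc2) in h. lia.
    replace (b + 2 * D + D) with (b + 3 * D) by ring. auto. }
  set (Cr := filter (fun y => crashed (C cs) y) (pres cs)).
  assert (F7 : INR (length Cr) <= Delta * INR (length (pres cs))) by (apply (fail_win (T k + D)); auto; lra).
  assert (F8 : (length (pres cs) <= length (pres c1) + length (Ew c1 c2) + length (Ew c2 c3))%nat).
  { pose proof (pop_change c1 cs h1s). pose proof (Ew_mono c1 cs c3 ltac:(lia)). pose proof (Ew_split c1 c2 c3 ltac:(lia)). lia. }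
  set (XLall := XL nb c3).
  assert (F9 : (length XLall <= length (XL nb c1) + length (XL c1 c2) + length (XL c2 c3))%nat).
  { apply len3. apply NoDup_filter, NoDup_pres.
    intros y hy. unfold XLall, XL in hy. apply filter_In in hy. destruct hy as [hyp hyl].
    pose proof hyp as hyp'. apply pres_spec, present_split in hyp'. destruct hyp' as [hye hyl0].
    destruct (has_left (C c1) y) eqn:E1.
    { left. unfold XL. apply filter_In. auto. }
    assert (hyp1 : In y (pres c1)).
    { apply pres_spec, present_split. split; auto. apply (entered_mono gamma S0 sched nb); auto. lia. }
    destruct (has_left (C c2) y) eqn:E2.
    { right; left. unfold XL. apply filter_In. auto. }
    right; right. unfold XL. apply filter_In. split; auto.
    apply pres_spec, present_split. split; auto. apply (entered_mono gamma S0 sched nb); auto. lia. }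
  set (P := present_in (changes (st (C u1) r) ++ Cw)).
  assert (F10 : (length (pres nb) <= length P + length XLall)%nat).
  { apply len2. apply NoDup_pres. intros y hy.
    pose proof hy as hy'. apply pres_spec, present_split in hy'. destruct hy' as [hye hyl].
    assert (hE : In (EvEnter y) (changes (st (C i1) w))).
    { destruct (entered_char nb y hye) as [hs|[j [hj hs]]].
      - apply (proj1 (s0_known i1)); auto.
      - unfold knows in HGw. apply (HGw j); auto. simpl. auto.
        assert (T j < b) by (apply Hnb; auto). pose proof (hTjb j H). unfold a in H0. lra. }
    destruct (classic (In (EvLeave y) (changes (st (C u1) r) ++ Cw))) as [hl|hl].
    - right. unfold XLall, XL. apply filter_In. split; auto.
      assert (hl2 : In (EvLeave y) (changes (st (C (S u1)) r))).
      { apply in_app_iff in hl. destruct hl as [hl|hl].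
        - apply (changes_mono gamma S0 sched u1); auto.
        - destruct (recv_eff u1 r i1 w _ Hu1s Hi1) as [hinc _]. apply hinc. simpl. auto. }
      apply (left_mono gamma S0 sched (S u1) c3 y ltac:(lia)). apply (proj1 (leave_real (S u1)) r y hl2).
    - left. unfold P. apply present_in_iff. split; auto. apply in_or_app; right. rewrite HCw. apply in_or_app; left; auto. }
  set (Sl := map sndr (filter (erc r) (seq 0 (S jr)))).
  assert (F11 : gamma * INR (length P) <= INR (length Sl)).
  { unfold Sl. rewrite length_map. unfold P. rewrite <- Hbbdef. eapply Rle_trans; [exact Hbbc|].
    apply le_INR. apply echo_count_bound. }
  assert (F12 : (length Sl <= length (Ew nb c3) + length XLall + length Cr)%nat).
  { apply len3. apply Sl_nodup. intros x hx.
    apply in_map_iff in hx. destruct hx as [j [hjx hj]]. apply filter_In in hj. destruct hj as [hjseq hjerc].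
    apply in_seq in hjseq.
    destruct (erc_info r j hjerc) as [v [x' [Cc [bq [i0' [h1 [h2 [h3 [h4 [h5 [h6 h7]]]]]]]]]]].
    rewrite hjx in h3. subst x'.
    pose proof (enter_unique i0' er r h5 Her) as ->.
    assert (hlack : ~ In ev (changes (st (C v) x))).
    { intros hin. apply Hnot. apply (recv_know j r v x _ ev h1 h2); [|lia]. simpl. rewrite h7. apply in_or_app; auto. }
    destruct (step_recv_ok v x er h4) as [hev [_ [hvact [hTv _]]]].
    assert (hTv2 : T er <= T v) by (apply T_mono; lia).
    assert (hvnb : (nb <= v)%nat) by (apply Hge_nb; lra).
    assert (hvent : entered (C v) x = true) by (apply active_split in hvact; tauto).
    assert (hvleft : has_left (C v) x = false) by (apply active_split in hvact; tauto).
    assert (HinE : forall ex, sched ex = SEnter x -> (ex < v)%nat -> entered (C nb) x = false -> In x (Ew nb c3)).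
    { intros ex hex hexv hnbe. apply In_Ew. exists ex. split; auto. split.
      - destruct (le_lt_dec nb ex); auto. rewrite (entered_from nb x) in hnbe; [discriminate|]. right. eauto.
      - apply Hlt_c3. assert (T ex <= T v) by (apply T_mono; lia). unfold a in hba. lra. }
    destruct (classic (inS0 S0 x = true \/ exists ex, sched ex = SEnter x /\ T ex <= T k)) as [hold|hnew].
    - assert (hna : exists t', T k <= t' <= T k + D /\ ~ active_at gamma S0 sched T x t').
      { apply NNPP. intros hcon.
        assert (hall : forall t', T k <= t' <= T k + D -> active_at gamma S0 sched T x t').
        { intros t' ht'. apply NNPP. intros hn. apply hcon. eauto. }
        assert (hkv : (k < v)%nat) by (apply T_lt_idx; lra).
        destruct (Nat.eq_dec x sg) as [->|hne].
        - destruct Hsg as [hs|hs].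
          + apply hlack. apply (changes_mono gamma S0 sched (S k)); auto.
          + rewrite (left_mono gamma S0 sched (S k) v sg ltac:(lia) hs) in hvleft. discriminate.
        - destruct (Hdel k sg M HB x hne hall) as [j' [hj'1 _]].
          pose proof (Hrc j' x hj'1).
          apply hlack. apply (recv_know j' x k sg M ev hj'1 HB Hin v). lia. }
      destruct hna as [t' [ht' hna]]. destruct (cut_exists t') as [n' hn'].
      rewrite (active_at_iff t' x n' hn') in hna.
      assert (hent' : entered (C n') x = true).
      { apply entered_from. destruct hold as [h|[ex [hex1 hex2]]]; auto. right. exists ex. split; auto.
        apply (cut_iff _ _ hn'). lra. }
      assert (hvn' : (v < n')%nat).
      { destruct (le_lt_dec n' v) as [h|h]; auto. exfalso. apply hna. apply (active_interval n' v x h hvact hent'). }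
      assert (hn'cs : (n' <= cs)%nat) by (apply (cut_le t' (T k + D)); auto; lra).
      assert (hlc : has_left (C n') x = true \/ crashed (C n') x = true).
      { destruct (has_left (C n') x) eqn:E1; auto. destruct (crashed (C n') x) eqn:E2; auto.
        exfalso. apply hna. apply active_split. auto. }
      destruct (has_left (C cs) x) eqn:Hlcs.
      + destruct (entered (C nb) x) eqn:Henb.
        * right; left. unfold XLall, XL. apply filter_In. split.
          -- apply pres_spec, present_split. split; auto.
             destruct (has_left (C nb) x) eqn:E; auto. rewrite (left_mono gamma S0 sched nb v x hvnb E) in hvleft. discriminate.
          -- apply (left_mono gamma S0 sched cs c3 x hs3 Hlcs).
        * left. destruct (entered_char v x hvent) as [h|[ex [hex1 hex2]]].
          -- rewrite (entered_from nb x (or_introl h)) in Henb. discriminate.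
          -- apply (HinE ex hex2 hex1); auto.
      + right; right. unfold Cr. apply filter_In. split.
        * apply pres_spec, present_split. split; auto. apply (entered_mono gamma S0 sched n'); auto.
        * destruct hlc as [hlc|hlc].
          -- rewrite (left_mono gamma S0 sched n' cs x hn'cs hlc) in Hlcs. discriminate.
          -- apply (crashed_mono gamma S0 sched n' cs x hn'cs hlc).
    - left. destruct (entered_char v x hvent) as [h|[ex [hex1 hex2]]].
      + exfalso. apply hnew. auto.
      + apply (HinE ex hex2 hex1).
        destruct (entered (C nb) x) eqn:E; auto. exfalso.
        destruct (entered_char nb x E) as [h|[ex' [hex'1 hex'2]]].
        * apply hnew; auto.
        * pose proof (enter_unique ex ex' x hex2 hex'2) as ->.
          assert (T ex' < b) by (apply Hnb; auto).
          apply hnew. right. exists ex'. split; auto. lra. }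
  assert (F13 : (Nmin <= length (pres nb))%nat) by (apply (Nmin_win b nb hb0 Hnb)).
  destruct (params alpha Delta gamma Nmin Ha0 Ha1 Hd0 HNp Hg) as [pa1 [pa2 [pa3 pa4]]].
  pose proof (Ew_split nb c1 c3 ltac:(lia)) as Es1. pose proof (Ew_split c1 c2 c3 ltac:(lia)) as Es2.
  rewrite !plus_INR in F1, F4, F6.
  apply (arith_core alpha Delta gamma (INR Nmin) (INR (length (pres nb))) (INR (length XLall))
    (INR (length (Ew nb c1))) (INR (length (Ew c1 c2))) (INR (length (Ew c2 c3)))
    (INR (length (XL nb c1))) (INR (length (XL c1 c2))) (INR (length (XL c2 c3)))
    (INR (length (pres c0))) (INR (length (pres c1))) (INR (length (pres c2))) (INR (length (pres cs)))
    (INR (length Cr)) (INR (length P)) (INR (length Sl)));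
  auto; try apply pos_INR; try (apply le_INR; auto); try (rewrite <- !plus_INR; apply le_INR; lia).
Qed.

Lemma G_all m : Gm m.
Proof.
  induction m as [m IH] using lt_wf_ind.
  intros r Hact Hjr k ev Hev Htk.
  destruct (orig k ev Hev) as [sg [M Hor]].
  pose proof Hor as [HB [Hin [Hsg Hrc]]].
  assert (Hkm : (k < m)%nat) by (apply T_lt_idx; lra).
  assert (Hdirect : inS0 S0 r = true \/ (exists e, sched e = SEnter r /\ T e <= T k) ->
                    In ev (changes (st (C m) r))).
  { intros Hent. destruct (Nat.eq_dec r sg) as [->|hne].
    - destruct Hsg as [h|h].
      + apply (changes_mono gamma S0 sched (S k)); auto.
      + exfalso. apply active_split in Hact. destruct Hact as [_ [hl _]].
        rewrite (left_mono gamma S0 sched (S k) m sg ltac:(lia) h) in hl. discriminate.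
    - destruct (deliver k sg M r m HB hne Hact ltac:(lra) Hent) as [j [hj1 [hj2 [hj3 hj4]]]].
      apply (recv_know j r k sg M ev hj1 HB Hin m ltac:(lia)). }
  destruct (inS0 S0 r) eqn:HS0. { apply Hdirect; auto. }
  assert (Hentr : entered (C m) r = true) by (apply active_split in Hact; tauto).
  destruct (entered_char m r Hentr) as [h|[er [her1 her2]]]; [congruence|].
  destruct (Rle_lt_dec (T er) (T k)) as [hle|hlt]. { apply Hdirect. right. eauto. }
  destruct (classic (exists j q, sched j = SRecv q k /\ (er < j)%nat)) as [[j [q [hj1 hj2]]]|hno].
  - destruct (step_recv_ok j q k hj1) as [_ [_ [_ [hTj _]]]].
    assert (hjm : (j < m)%nat) by (apply T_lt_idx; lra).
    destruct (Nat.eq_dec q r) as [->|hqr].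
    + apply (recv_know j r k sg M ev hj1 HB Hin m ltac:(lia)).
    + destruct (Hrc j q hj1) as [M' [hB' hin']].
      destruct (deliver j q M' r m hB' ltac:(auto) Hact ltac:(lra)) as [j' [h1 [h2 [h3 h4]]]].
      { right. exists er. split; auto. apply T_mono. lia. }
      apply (recv_know j' r j q M' ev h1 hB' hin' m ltac:(lia)).
  - destruct (classic (In ev (changes (st (C m) r)))) as [hh|hh]; auto. exfalso.
    destruct Hjr as [h|Hjr]; [congruence|].
    apply (count_case m r k ev sg M er IH HS0 Hact Hjr Hor Hev her2 her1 hlt); auto.
    intros j q hj. destruct (lt_eq_lt_dec j er) as [[h|h]|h]; auto.
    + subst. congruence.
    + exfalso. apply hno. eauto.
Qed.
End Main.

Theorem lemma6 (S0 : list Node) (sched : nat -> Step) (T : nat -> R)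
  (D alpha Delta gamma : R) (Nmin : nat) :
  0 < D ->
  0 <= alpha -> alpha <= 1 - Rpower 2 (- (1 / 4)) ->
  0 <= Delta -> Delta < 1 ->
  1 < ((1 - alpha) ^ 3 - Delta * (1 + alpha) ^ 3) * INR Nmin ->
  gamma >= 1 / (INR Nmin * (1 - alpha) ^ 3)
           + (1 + Delta) * (1 + alpha) ^ 3 / (1 - alpha) ^ 3 - 1 ->
  time_ok T ->
  (forall n, step_ok gamma S0 sched T D n) ->
  delivery_ok gamma S0 sched T D ->
  Nmin_ok gamma S0 sched T Nmin ->
  churn_ok gamma S0 sched T D alpha ->
  failures_ok gamma S0 sched T Delta ->
  forall (p : Node) (nj : nat) (t : R),
    ~ In p S0 ->
    joins_at gamma S0 sched p nj ->
    T nj <= t ->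
    active_at gamma S0 sched T p t ->
    forall n, cut T t n ->
    forall ev, in_SysInfo gamma S0 sched T 0 (Rmax 0 (t - 2 * D)) ev ->
    In ev (changes (st (cfg gamma S0 sched n) p)).
Proof.
  intros HD ha0 ha1 hd0 hd1 hN hg Htime Hstep Hdel HNmin Hchurn Hfail p nj t HpS0 Hj Hnj Hact n Hcut ev [k [[h0 h1] hev]].
  assert (hk : T k + 2 * D < T n).
  { pose proof (T_pos T Htime k). destruct Hcut as [_ hc].
    unfold Rmax in h1. destruct (Rle_dec 0 (t - 2 * D)); lra. }
  assert (Hn : (nj < n)%nat) by (apply (cut_iff T Htime t n Hcut); auto).
  pose proof (G_all S0 sched T D alpha Delta gamma Nmin HD Htime Hstep Hdel HNmin Hchurn Hfail ha0 ha1 hd0 hN hg n) as G.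
  unfold Gm, knows in G. apply (G p) with (k := k); auto.
  - apply (active_at_iff S0 sched T gamma Htime t p n Hcut); auto.
  - right. apply (joined_mono gamma S0 sched (S nj) n p ltac:(lia)). destruct Hj as [_ h]. exact h.
Qed.
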